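(* If $\lambda_n\to\infty$, then for every $d>-1$, $$\rho(\psi_d,\lambda_n)=1-\frac{(d-1)^2}{6\lambda_n}+O(\lambda_n^{-2}).$$
   Context: $\lambda_n>0$ is a sequence of parameters; $\xi\sim\mathrm{Poisson}(\lambda_n)$. For a real function $h$ on $[0,\infty)$, $r_n=\lambda_n^{-1}\mathrm{cov}(h(\xi),\xi)$ and $\rho(h,\lambda_n)=\mathrm{corr}(h(\xi)-r_n\xi,\ \xi^2-(2\lambda_n+1)\xi)$. Power divergence functions: $\psi_d(x)=\frac{2}{d(d+1)}x[(x/\lambda_n)^d-1]$ for $d>-1$, $d\ne0$, and $\psi_0(x)=2x\log(x/\lambda_n)$. *)

(* Defs.v *)
From Stdlib Require Import Reals.
From Coquelicot Require Import Coquelicot.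
Open Scope R_scope.

Definition pois_pmf (lam : R) (k : nat) : R :=
  exp (- lam) * lam ^ k / INR (Factorial.fact k).

Definition pois_E (lam : R) (f : R -> R) : R :=
  Series (fun k => f (INR k) * pois_pmf lam k).

Definition pois_cov (lam : R) (f g : R -> R) : R :=
  pois_E lam (fun x => f x * g x) - pois_E lam f * pois_E lam g.

Definition pois_var (lam : R) (f : R -> R) : R := pois_cov lam f f.

Definition pois_corr (lam : R) (f g : R -> R) : R :=
  pois_cov lam f g / sqrt (pois_var lam f * pois_var lam g).

Definition r_coef (h : R -> R) (lam : R) : R :=
  pois_cov lam h (fun x => x) / lam.

Definition rho (h : R -> R) (lam : R) : R :=
  pois_corr lam (fun x => h x - r_coef h lam * x)
                (fun x => x ^ 2 - (2 * lam + 1) * x).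

(* Power divergence function psi_d (depending on lam).  At x = 0 the value
   is 0 (the continuous extension): Rpower 0 d = 1 and ln 0 = 0 in Stdlib,
   and both are multiplied by x = 0. *)
Definition psi (d lam x : R) : R :=
  if Req_EM_T d 0 then 2 * x * ln (x / lam)
  else 2 / (d * (d + 1)) * x * (Rpower (x / lam) d - 1).

(* Main.v *)
Require Import Defs.
From Stdlib Require Import Reals Lra Lia Psatz List.
From Coquelicot Require Import Coquelicot.
Open Scope R_scope.
Import ListNotations.


Definition good (f : R -> R) : Prop :=
  exists C m, forall k : nat, Rabs (f (INR k)) <= C * (1 + INR k) ^ m.

Lemma pmf_nonneg lam k : 0 <= lam -> 0 <= pois_pmf lam k.
Proof.
  intros H. unfold pois_pmf. apply Rmult_le_pos.
  - apply Rmult_le_pos. left; apply exp_pos. apply pow_le; auto.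
  - left; apply Rinv_0_lt_compat, lt_0_INR, Factorial.lt_O_fact.
Qed.

Lemma pmf_S lam k : pois_pmf lam (S k) = lam / INR (S k) * pois_pmf lam k.
Proof.
  unfold pois_pmf. rewrite fact_simpl, mult_INR. simpl pow.
  assert (0 < INR (S k)) by apply lt_0_INR, Nat.lt_0_succ.
  assert (0 < INR (Factorial.fact k)) by apply lt_0_INR, Factorial.lt_O_fact.
  field. lra.
Qed.

Lemma pmf_series lam : is_series (pois_pmf lam) 1.
Proof.
  assert (H := proj2_sig (exist_exp lam)). simpl in H.
  change (proj1_sig (exist_exp lam)) with (exp lam) in H.
  apply is_series_Reals in H.
  replace 1 with (exp (-lam) * exp lam).
  2:{ rewrite <- exp_plus. replace (-lam+lam) with 0 by ring. apply exp_0. }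
  apply (is_series_scal_l (exp (-lam))) in H.
  eapply is_series_ext; [|exact H].
  intros n. unfold pois_pmf. unfold scal; simpl. unfold mult; simpl. field.
  apply not_0_INR, Nat.neq_0_lt_0, Factorial.lt_O_fact.
Qed.

Lemma ex_series_leR (a b : nat -> R) :
  (forall n, Rabs (a n) <= b n) -> ex_series b -> ex_series a.
Proof. intros H Hb. apply (@ex_series_le R_AbsRing R_CompleteNormedModule a b); auto. Qed.

Lemma ex_series_scalR (c : R) (a : nat -> R) :
  ex_series a -> ex_series (fun n => c * a n).
Proof. intros H. apply (@ex_series_scal_l R_AbsRing R_NormedModule c a H). Qed.

Lemma ex_series_plusR (a b : nat -> R) :
  ex_series a -> ex_series b -> ex_series (fun n => a n + b n).
Proof. intros H1 H2. apply (@ex_series_plus R_AbsRing R_NormedModule a b H1 H2). Qed.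

Lemma ser_pow lam m : 0 <= lam -> ex_series (fun k => (1 + INR k) ^ m * pois_pmf lam k).
Proof.
  intros Hl. induction m.
  - apply (ex_series_ext (pois_pmf lam)); [intros; simpl; ring|]. eexists; apply pmf_series.
  - assert (E2 : ex_series (fun k => INR k * (1 + INR k) ^ m * pois_pmf lam k)).
    { apply ex_series_incr_1.
      apply (ex_series_leR _ (fun k => lam * 2 ^ m * ((1 + INR k) ^ m * pois_pmf lam k))).
      + intros k. rewrite pmf_S.
        rewrite S_INR.
        assert (0 <= INR k) by apply pos_INR.
        assert (0 <= pois_pmf lam k) by (apply pmf_nonneg; auto).
        replace (1 + (INR k + 1)) with (2 + INR k) by ring.
        replace ((INR k + 1) * (2 + INR k) ^ m * (lam / (INR k + 1) * pois_pmf lam k))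
          with (lam * (2 + INR k) ^ m * pois_pmf lam k) by (field; lra).
        rewrite Rabs_pos_eq.
        2:{ apply Rmult_le_pos; auto. apply Rmult_le_pos; auto. apply pow_le; lra. }
        replace (lam * 2 ^ m * ((1 + INR k) ^ m * pois_pmf lam k))
          with (lam * (2 ^ m * (1 + INR k) ^ m) * pois_pmf lam k) by ring.
        apply Rmult_le_compat_r; auto. apply Rmult_le_compat_l; auto.
        rewrite <- Rpow_mult_distr. apply pow_incr. lra.
      + apply (ex_series_scalR (lam * 2^m)) in IHm. exact IHm. }
    eapply ex_series_ext; [|apply (ex_series_plusR _ _ IHm E2)].
    intros k. simpl. ring.
Qed.

Lemma good_ex lam f : 0 <= lam -> good f -> ex_series (fun k => f (INR k) * pois_pmf lam k).
Proof.
  intros Hl [C [m H]]. apply ex_series_Rabs.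
  apply (ex_series_leR _ (fun k => C * ((1 + INR k) ^ m * pois_pmf lam k))).
  - intros k. rewrite Rabs_Rabsolu, Rabs_mult.
    rewrite (Rabs_pos_eq (pois_pmf lam k)) by (apply pmf_nonneg; auto).
    rewrite <- Rmult_assoc. apply Rmult_le_compat_r. apply pmf_nonneg; auto. apply H.
  - apply (ex_series_scalR C). apply ser_pow; auto.
Qed.

Lemma E_ext lam f g : (forall k : nat, f (INR k) = g (INR k)) -> pois_E lam f = pois_E lam g.
Proof. intros H. unfold pois_E. apply Series_ext. intros; rewrite H; auto. Qed.

Lemma E_add lam f g : 0 <= lam -> good f -> good g ->
  pois_E lam (fun x => f x + g x) = pois_E lam f + pois_E lam g.
Proof.
  intros Hl Hf Hg. unfold pois_E. rewrite <- Series_plus by (apply good_ex; auto).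
  apply Series_ext; intros; ring.
Qed.

Lemma E_scal lam c f : pois_E lam (fun x => c * f x) = c * pois_E lam f.
Proof. unfold pois_E. rewrite <- Series_scal_l. apply Series_ext; intros; ring. Qed.

Lemma E_one lam : pois_E lam (fun _ => 1) = 1.
Proof.
  unfold pois_E. apply is_series_unique.
  apply (is_series_ext (pois_pmf lam)); [intros; simpl; ring|apply pmf_series].
Qed.

Lemma E_const lam c : pois_E lam (fun _ => c) = c.
Proof.
  rewrite (E_ext lam _ (fun x => c * 1)) by (intros; ring). rewrite E_scal, E_one. ring.
Qed.

Lemma E_nonneg lam f : 0 <= lam -> good f -> (forall k : nat, 0 <= f (INR k)) -> 0 <= pois_E lam f.
Proof.
  intros Hl Hg H. unfold pois_E.
  replace 0 with (Series (fun _ : nat => 0)).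
  2:{ rewrite (Series_ext _ (fun n => 0 * pois_pmf lam n)) by (intros; ring).
        rewrite Series_scal_l. ring. }
  apply Series_le.
  - intros; split; [lra|]. apply Rmult_le_pos; auto. apply pmf_nonneg; auto.
  - apply good_ex; auto.
Qed.


Lemma pos1k (k : nat) : 1 <= 1 + INR k.
Proof. assert (0 <= INR k) by apply pos_INR. lra. Qed.

Lemma good_C f : good f -> exists C m, 0 <= C /\ forall k : nat, Rabs (f (INR k)) <= C * (1 + INR k) ^ m.
Proof.
  intros [C [m H]]. exists (Rabs C), m. split; [apply Rabs_pos|].
  intros k. eapply Rle_trans; [apply H|]. apply Rmult_le_compat_r.
  apply pow_le; generalize (pos1k k); lra. apply RRle_abs.
Qed.

Lemma good_const c : good (fun _ => c).
Proof. exists (Rabs c), 0%nat. intros; simpl; lra. Qed.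

Lemma good_id : good (fun x => x).
Proof. exists 1, 1%nat. intros k. rewrite Rabs_pos_eq by apply pos_INR. simpl; lra. Qed.

Lemma good_add f g : good f -> good g -> good (fun x => f x + g x).
Proof.
  intros Hf Hg. destruct (good_C _ Hf) as [C1 [m1 [P1 H1]]].
  destruct (good_C _ Hg) as [C2 [m2 [P2 H2]]].
  exists (C1 + C2), (m1 + m2)%nat. intros k.
  eapply Rle_trans; [apply Rabs_triang|].
  assert (A1 : (1 + INR k) ^ m1 <= (1 + INR k) ^ (m1 + m2)) by (apply Rle_pow; [apply pos1k|lia]).
  assert (A2 : (1 + INR k) ^ m2 <= (1 + INR k) ^ (m1 + m2)) by (apply Rle_pow; [apply pos1k|lia]).
  specialize (H1 k). specialize (H2 k).
  assert (C1 * (1 + INR k) ^ m1 <= C1 * (1 + INR k) ^ (m1 + m2)) by (apply Rmult_le_compat_l; auto).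
  assert (C2 * (1 + INR k) ^ m2 <= C2 * (1 + INR k) ^ (m1 + m2)) by (apply Rmult_le_compat_l; auto).
  nra.
Qed.

Lemma good_mul f g : good f -> good g -> good (fun x => f x * g x).
Proof.
  intros Hf Hg. destruct (good_C _ Hf) as [C1 [m1 [P1 H1]]].
  destruct (good_C _ Hg) as [C2 [m2 [P2 H2]]].
  exists (C1 * C2), (m1 + m2)%nat. intros k. rewrite Rabs_mult, pow_add.
  replace (C1 * C2 * ((1 + INR k) ^ m1 * (1 + INR k) ^ m2)) with
    ((C1 * (1 + INR k) ^ m1) * (C2 * (1 + INR k) ^ m2)) by ring.
  apply Rmult_le_compat; auto; apply Rabs_pos.
Qed.

Lemma good_le f g : (forall k : nat, Rabs (f (INR k)) <= Rabs (g (INR k))) -> good g -> good f.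
Proof.
  intros H [C [m Hg]]. exists C, m. intros k. eapply Rle_trans; [apply H|apply Hg].
Qed.

Lemma good_abs f : good f -> good (fun x => Rabs (f x)).
Proof. intros. eapply good_le; [|eauto]. intros; rewrite Rabs_Rabsolu; lra. Qed.

Lemma good_pow f j : good f -> good (fun x => f x ^ j).
Proof.
  intros Hf. induction j.
  - simpl. apply good_const.
  - simpl. apply (good_mul f (fun x => f x ^ j)); auto.
Qed.

Lemma good_scal c f : good f -> good (fun x => c * f x).
Proof. intros; apply good_mul; auto; apply good_const. Qed.

Lemma good_opp f : good f -> good (fun x => - f x).
Proof. intros H. eapply good_le; [|apply H]. intros; rewrite Rabs_Ropp; lra. Qed.

Lemma good_sub f g : good f -> good g -> good (fun x => f x - g x).
Proof. intros; apply good_add; auto; apply good_opp; auto. Qed.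

Lemma good_shift f : good f -> good (fun x => f (x + 1)).
Proof.
  intros Hf. destruct (good_C _ Hf) as [C [m [P H]]].
  exists (C * 2 ^ m), m. intros k. rewrite <- S_INR. eapply Rle_trans; [apply H|].
  rewrite Rmult_assoc. apply Rmult_le_compat_l; auto.
  rewrite <- Rpow_mult_distr. apply pow_incr. rewrite S_INR.
  assert (0 <= INR k) by apply pos_INR. lra.
Qed.

Lemma E_sub lam f g : 0 <= lam -> good f -> good g ->
  pois_E lam (fun x => f x - g x) = pois_E lam f - pois_E lam g.
Proof.
  intros Hl Hf Hg. unfold Rminus at 1.
  rewrite (E_ext lam (fun x => f x + - g x) (fun x => f x + (-1) * g x)) by (intros; ring).
  rewrite E_add; auto. rewrite E_scal. ring. apply good_scal; auto.
Qed.

Lemma E_le lam f g : 0 <= lam -> good f -> good g -> (forall k : nat, f (INR k) <= g (INR k)) ->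
  pois_E lam f <= pois_E lam g.
Proof.
  intros Hl Hf Hg H. assert (0 <= pois_E lam (fun x => g x - f x)).
  { apply E_nonneg; auto. apply good_sub; auto. intros k; specialize (H k); lra. }
  rewrite E_sub in H0; auto. lra.
Qed.

Lemma E_abs lam f : 0 <= lam -> good f -> Rabs (pois_E lam f) <= pois_E lam (fun x => Rabs (f x)).
Proof.
  intros Hl Hf. apply Rabs_le. split.
  - assert (pois_E lam (fun x => (-1) * Rabs (f x)) <= pois_E lam f).
    { apply E_le; auto. apply good_scal, good_abs; auto.
      intros k. pose proof (Rle_abs (- f (INR k))). rewrite Rabs_Ropp in H. lra. }
    rewrite E_scal in H. lra.
  - apply E_le; auto. apply good_abs; auto. intros; apply Rle_abs.
Qed.

Lemma stein lam f : 0 <= lam -> good f ->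
  pois_E lam (fun x => x * f x) = lam * pois_E lam (fun x => f (x + 1)).
Proof.
  intros Hl Hf. unfold pois_E.
  rewrite Series_incr_1.
  2:{ apply (good_ex lam (fun x => x * f x)); auto. apply good_mul; auto; apply good_id. }
  rewrite <- Series_scal_l. simpl INR at 1.
  rewrite Rmult_0_l, Rmult_0_l, Rplus_0_l.
  apply Series_ext. intros k. rewrite pmf_S, S_INR.
  assert (0 <= INR k) by apply pos_INR. field. lra.
Qed.

Lemma E_sum lam (g : nat -> R -> R) n : 0 <= lam -> (forall i, good (g i)) ->
  pois_E lam (fun x => sum_f_R0 (fun i => g i x) n) = sum_f_R0 (fun i => pois_E lam (g i)) n.
Proof.
  intros Hl Hg. induction n.
  - simpl. reflexivity.
  - simpl. rewrite E_add; auto. rewrite IHn; auto.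
    clear IHn. induction n. simpl; auto. simpl. apply good_add; auto.
Qed.


Definition mu lam j := pois_E lam (fun x => (x - lam) ^ j).

Lemma good_Y lam j : good (fun x => (x - lam) ^ j).
Proof. apply (good_pow (fun x => x - lam)). apply good_sub. apply good_id. apply good_const. Qed.

Lemma stein_c lam f : 0 <= lam -> good f ->
  pois_E lam (fun x => (x - lam) * f x) = lam * (pois_E lam (fun x => f (x + 1)) - pois_E lam f).
Proof.
  intros Hl Hf.
  rewrite (E_ext lam _ (fun x => x * f x - lam * f x)) by (intros; ring).
  rewrite E_sub; auto. rewrite stein, E_scal; auto. ring.
  apply good_mul; auto; apply good_id. apply good_scal; auto.
Qed.

Lemma mu_step lam k : 0 <= lam ->
  mu lam (S k) = lam * (pois_E lam (fun x => (x - lam + 1) ^ k) - mu lam k).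
Proof.
  intros Hl. unfold mu. simpl pow at 1. rewrite stein_c; auto. 2: apply good_Y.
  f_equal. f_equal. apply E_ext. intros; f_equal; ring.
Qed.

Lemma C_nonneg n i : 0 <= Binomial.C n i.
Proof.
  unfold Binomial.C. apply Rmult_le_pos. apply pos_INR.
  left; apply Rinv_0_lt_compat. apply Rmult_lt_0_compat; apply lt_0_INR, Factorial.lt_O_fact.
Qed.

Lemma mu_rec lam k : 0 <= lam ->
  mu lam (S k) = lam * (sum_f_R0 (fun i => Binomial.C k i * mu lam i) k - mu lam k).
Proof.
  intros Hl. rewrite mu_step; auto. f_equal. f_equal.
  rewrite (E_ext lam _ (fun x => sum_f_R0 (fun i => Binomial.C k i * (x - lam) ^ i * 1 ^ (k - i)) k)).
  2:{ intros. rewrite <- binomial. auto. }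
  rewrite E_sum; auto.
  - apply sum_eq. intros i _. rewrite (E_ext lam _ (fun x => Binomial.C k i * (x - lam) ^ i)) by (intros; rewrite pow1; ring). rewrite E_scal. auto.
  - intros i. rewrite pow1. eapply good_le; [|apply (good_scal (Binomial.C k i) _ (good_Y lam i))].
    intros; rewrite Rmult_1_r; lra.
Qed.

Lemma mu0 lam : mu lam 0 = 1.
Proof. unfold mu. simpl. apply E_one. Qed.

Lemma sumC_le n m : (m <= n)%nat -> sum_f_R0 (fun i => Binomial.C n i) m <= 2 ^ n.
Proof.
  intros Hm. replace (2 ^ n) with ((1 + 1) ^ n) by (f_equal; ring).
  rewrite binomial.
  assert (forall p, (m + p <= n)%nat -> sum_f_R0 (fun i => Binomial.C n i) m <=
     sum_f_R0 (fun i => Binomial.C n i * 1 ^ i * 1 ^ (n - i)) (m + p)).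
  { induction p; intros Hp.
    - rewrite Nat.add_0_r. apply Req_le. apply sum_eq. intros. rewrite !pow1; ring.
    - rewrite Nat.add_succ_r. simpl. eapply Rle_trans; [apply IHp; lia|].
      rewrite !pow1. generalize (C_nonneg n (S (m + p))). lra. }
  assert (Hp := H (n - m)%nat ltac:(lia)). replace (m + (n - m))%nat with n in Hp by lia. exact Hp.
Qed.

Lemma Cnn n : Binomial.C n n = 1.
Proof.
  unfold Binomial.C. rewrite Nat.sub_diag. simpl Factorial.fact.
  assert (0 < INR (Factorial.fact n)) by apply lt_0_INR, Factorial.lt_O_fact.
  simpl INR. field. lra.
Qed.

Lemma mu_bound k : exists c, 0 <= c /\ forall lam, 1 <= lam -> forall j, (j <= k)%nat ->
  Rabs (mu lam j) <= c * lam ^ (Nat.div2 j).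
Proof.
  induction k.
  - exists 1. split; [lra|]. intros lam Hl j Hj. replace j with 0%nat by lia.
    rewrite mu0. simpl. rewrite Rabs_R1. lra.
  - destruct IHk as [c [Hc H]]. exists (c * 2 ^ (S k)). split.
    { apply Rmult_le_pos; auto. apply pow_le; lra. }
    intros lam Hl j Hj. destruct (Nat.eq_dec j (S k)) as [->|Hne].
    2:{ eapply Rle_trans; [apply H; auto; lia|]. apply Rmult_le_compat_r.
        apply pow_le; lra. rewrite <- (Rmult_1_r c) at 1. apply Rmult_le_compat_l; auto.
        apply pow_R1_Rle; lra. }
    rewrite mu_rec by lra. destruct k.
    + simpl. rewrite Cnn. replace (lam * (1 * mu lam 0 - mu lam 0)) with 0 by ring.
      rewrite Rabs_R0. simpl. nra.
    + replace (sum_f_R0 (fun i => Binomial.C (S k) i * mu lam i) (S k) - mu lam (S k))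
        with (sum_f_R0 (fun i => Binomial.C (S k) i * mu lam i) k)
        by (simpl; rewrite Cnn; ring).
      rewrite Rabs_mult, (Rabs_pos_eq lam) by lra.
      eapply Rle_trans.
      { apply Rmult_le_compat_l; [lra|]. eapply Rle_trans; [apply sum_f_R0_triangle|].
        apply (sum_Rle _ (fun i => Binomial.C (S k) i * (c * lam ^ Nat.div2 k))).
        intros i Hi. rewrite Rabs_mult, (Rabs_pos_eq (Binomial.C _ _)) by apply C_nonneg.
        apply Rmult_le_compat_l; [apply C_nonneg|].
        eapply Rle_trans; [apply H; auto; lia|]. apply Rmult_le_compat_l; auto.
        apply Rle_pow; auto. apply Nat.div2_le_mono; auto. }
      rewrite <- scal_sum.
      assert (HS := sumC_le (S k) k (Nat.le_succ_diag_r k)).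
      assert (0 <= c * lam ^ Nat.div2 k) by (apply Rmult_le_pos; auto; apply pow_le; lra).
      change (Nat.div2 (S (S k))) with (S (Nat.div2 k)).
      assert (2 ^ S k <= 2 ^ S (S k)) by (apply Rle_pow; [lra|lia]).
      simpl pow at 3. 
      assert (0 <= sum_f_R0 (fun i => Binomial.C (S k) i) k).
      { apply cond_pos_sum. intros; apply C_nonneg. }
      assert (sum_f_R0 (fun i => Binomial.C (S k) i) k * (c * lam ^ Nat.div2 k) <=
              2 ^ S (S k) * (c * lam ^ Nat.div2 k)).
      { apply Rmult_le_compat_r; auto. lra. }
      change (sum_f_R0 (Binomial.C (S k)) k) with (sum_f_R0 (fun i => Binomial.C (S k) i) k).
      replace (c * 2 ^ S (S k) * (lam * lam ^ Nat.div2 k)) with (lam * (2 ^ S (S k) * (c * lam ^ Nat.div2 k))) by ring.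
      apply Rmult_le_compat_l; [lra|]. lra.
Qed.


Fixpoint pe (l : list R) (y : R) : R :=
  match l with nil => 0 | cons c l' => c + y * pe l' y end.

Fixpoint msum (m : nat -> R) (i : nat) (l : list R) : R :=
  match l with nil => 0 | cons c l' => c * m i + msum m (S i) l' end.

Lemma good_pe l phi : good phi -> good (fun x => pe l (phi x)).
Proof.
  intros H. induction l; simpl.
  - apply good_const.
  - apply good_add. apply good_const. apply good_mul; auto.
Qed.

Lemma E_pe lam phi : 0 <= lam -> good phi -> forall l i,
  pois_E lam (fun x => pe l (phi x) * phi x ^ i) = msum (fun j => pois_E lam (fun x => phi x ^ j)) i l.
Proof.
  intros Hl Hp. induction l; intros i; simpl.
  - rewrite E_scal. ring.
  - rewrite (E_ext lam _ (fun x => a * phi x ^ i + pe l (phi x) * phi x ^ (S i))) by (intros; simpl; ring).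
    rewrite E_add; auto. rewrite E_scal, IHl. auto.
    apply good_scal, good_pow; auto. apply good_mul. apply good_pe; auto. apply good_pow; auto.
Qed.

Lemma E_pe0 lam phi l : 0 <= lam -> good phi ->
  pois_E lam (fun x => pe l (phi x)) = msum (fun j => pois_E lam (fun x => phi x ^ j)) 0 l.
Proof.
  intros Hl Hp. rewrite <- E_pe; auto. apply E_ext. intros; simpl; ring.
Qed.

Lemma good_Y1 lam : good (fun x => x - lam).
Proof. apply good_sub. apply good_id. apply good_const. Qed.

Lemma mu1 lam : 0 <= lam -> mu lam 1 = 0.
Proof.
  intros Hl. rewrite mu_step; auto.
  rewrite (E_ext lam _ (fun x => pe [1] (x - lam))) by (intros; simpl; ring).
  rewrite E_pe0; auto. 2: apply good_Y1. cbn [msum].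
  repeat match goal with |- context [pois_E lam (fun x => (x - lam) ^ ?j)] => fold (mu lam j) end.
  rewrite mu0. ring.
Qed.

Lemma mu2 lam : 0 <= lam -> mu lam 2 = lam.
Proof.
  intros Hl. rewrite mu_step; auto.
  rewrite (E_ext lam _ (fun x => pe [1; 1] (x - lam))) by (intros; simpl; ring).
  rewrite E_pe0; auto. 2: apply good_Y1. cbn [msum].
  repeat match goal with |- context [pois_E lam (fun x => (x - lam) ^ ?j)] => fold (mu lam j) end.
  rewrite mu0. rewrite mu1; auto. ring.
Qed.

Lemma mu3 lam : 0 <= lam -> mu lam 3 = lam.
Proof.
  intros Hl. rewrite mu_step; auto.
  rewrite (E_ext lam _ (fun x => pe [1; 2; 1] (x - lam))) by (intros; simpl; ring).
  rewrite E_pe0; auto. 2: apply good_Y1. cbn [msum].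
  repeat match goal with |- context [pois_E lam (fun x => (x - lam) ^ ?j)] => fold (mu lam j) end.
  rewrite mu0. rewrite mu1; auto. rewrite mu2; auto. ring.
Qed.

Lemma mu4 lam : 0 <= lam -> mu lam 4 = 3*lam^2+lam.
Proof.
  intros Hl. rewrite mu_step; auto.
  rewrite (E_ext lam _ (fun x => pe [1; 3; 3; 1] (x - lam))) by (intros; simpl; ring).
  rewrite E_pe0; auto. 2: apply good_Y1. cbn [msum].
  repeat match goal with |- context [pois_E lam (fun x => (x - lam) ^ ?j)] => fold (mu lam j) end.
  rewrite mu0. rewrite mu1; auto. rewrite mu2; auto. rewrite mu3; auto. ring.
Qed.

Lemma mu5 lam : 0 <= lam -> mu lam 5 = 10*lam^2+lam.
Proof.
  intros Hl. rewrite mu_step; auto.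
  rewrite (E_ext lam _ (fun x => pe [1; 4; 6; 4; 1] (x - lam))) by (intros; simpl; ring).
  rewrite E_pe0; auto. 2: apply good_Y1. cbn [msum].
  repeat match goal with |- context [pois_E lam (fun x => (x - lam) ^ ?j)] => fold (mu lam j) end.
  rewrite mu0. rewrite mu1; auto. rewrite mu2; auto. rewrite mu3; auto. rewrite mu4; auto. ring.
Qed.

Lemma mu6 lam : 0 <= lam -> mu lam 6 = 15*lam^3+25*lam^2+lam.
Proof.
  intros Hl. rewrite mu_step; auto.
  rewrite (E_ext lam _ (fun x => pe [1; 5; 10; 10; 5; 1] (x - lam))) by (intros; simpl; ring).
  rewrite E_pe0; auto. 2: apply good_Y1. cbn [msum].
  repeat match goal with |- context [pois_E lam (fun x => (x - lam) ^ ?j)] => fold (mu lam j) end.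
  rewrite mu0. rewrite mu1; auto. rewrite mu2; auto. rewrite mu3; auto. rewrite mu4; auto. rewrite mu5; auto. ring.
Qed.

Lemma mu7 lam : 0 <= lam -> mu lam 7 = 105*lam^3+56*lam^2+lam.
Proof.
  intros Hl. rewrite mu_step; auto.
  rewrite (E_ext lam _ (fun x => pe [1; 6; 15; 20; 15; 6; 1] (x - lam))) by (intros; simpl; ring).
  rewrite E_pe0; auto. 2: apply good_Y1. cbn [msum].
  repeat match goal with |- context [pois_E lam (fun x => (x - lam) ^ ?j)] => fold (mu lam j) end.
  rewrite mu0. rewrite mu1; auto. rewrite mu2; auto. rewrite mu3; auto. rewrite mu4; auto. rewrite mu5; auto. rewrite mu6; auto. ring.
Qed.

Lemma mu8 lam : 0 <= lam -> mu lam 8 = 105*lam^4+490*lam^3+119*lam^2+lam.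
Proof.
  intros Hl. rewrite mu_step; auto.
  rewrite (E_ext lam _ (fun x => pe [1; 7; 21; 35; 35; 21; 7; 1] (x - lam))) by (intros; simpl; ring).
  rewrite E_pe0; auto. 2: apply good_Y1. cbn [msum].
  repeat match goal with |- context [pois_E lam (fun x => (x - lam) ^ ?j)] => fold (mu lam j) end.
  rewrite mu0. rewrite mu1; auto. rewrite mu2; auto. rewrite mu3; auto. rewrite mu4; auto. rewrite mu5; auto. rewrite mu6; auto. rewrite mu7; auto. ring.
Qed.


Lemma dern (g : nat -> R -> R) (P : R -> Prop) :
  open P ->
  (forall k t, P t -> (k <= 4)%nat -> is_derive (g k) t (g (S k) t)) ->
  forall k t, (k <= 5)%nat -> P t -> Derive_n (g 0%nat) k t = g k t /\ ex_derive_n (g 0%nat) k t.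
Proof.
  intros HP Hd. induction k; intros t Hk Ht.
  - simpl. split; auto.
  - assert (Hloc : locally t (fun s => Derive_n (g 0%nat) k s = g k s)).
    { apply (filter_imp P). intros s Hs. apply IHk; auto. lia. apply HP; auto. }
    split.
    + simpl. rewrite (Derive_ext_loc _ (g k) t Hloc). apply is_derive_unique. apply Hd; auto. lia.
    + simpl. apply (ex_derive_ext_loc (g k)).
      apply (filter_imp (fun s => Derive_n (g 0%nat) k s = g k s)); auto.
      exists (g (S k) t). apply Hd; auto. lia.
Qed.

Lemma taylor_right (g : nat -> R -> R) (P : R -> Prop) :
  open P ->
  (forall k t, P t -> (k <= 4)%nat -> is_derive (g k) t (g (S k) t)) ->
  forall y, 1 < y -> (forall t, 1 <= t <= y -> P t) ->
  exists z, 1 < z < y /\ g 0%nat y = g 0%nat 1 + (y-1) * g 1%nat 1 + (y-1)^2/2 * g 2%nat 1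
     + (y-1)^3/6 * g 3%nat 1 + (y-1)^4/24 * g 4%nat 1 + (y-1)^5/120 * g 5%nat z.
Proof.
  intros HP Hd y Hy HPy.
  destruct (Taylor_Lagrange (g 0%nat) 4 1 y Hy) as [z [Hz E]].
  { intros t Ht k Hk. apply (dern g P); auto. }
  exists z. split; auto. rewrite E.
  assert (D : forall k, (k <= 5)%nat -> Derive_n (g 0%nat) k 1 = g k 1).
  { intros k Hk. apply (dern g P); auto. apply HPy; lra. }
  rewrite (proj1 (dern g P HP Hd 5 z (le_n 5) (HPy z ltac:(lra)))).
  cbn [sum_f_R0]. rewrite (D 0%nat), (D 1%nat), (D 2%nat), (D 3%nat), (D 4%nat) by lia. simpl. field.
Qed.

Lemma taylor5 (g : nat -> R -> R) :
  (forall k t, 0 < t -> (k <= 4)%nat -> is_derive (g k) t (g (S k) t)) ->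
  forall y, 0 < y -> exists z, Rmin 1 y <= z <= Rmax 1 y /\
   g 0%nat y = g 0%nat 1 + (y-1) * g 1%nat 1 + (y-1)^2/2 * g 2%nat 1
     + (y-1)^3/6 * g 3%nat 1 + (y-1)^4/24 * g 4%nat 1 + (y-1)^5/120 * g 5%nat z.
Proof.
  intros Hd y Hy. destruct (Rtotal_order y 1) as [Hlt|[Heq|Hgt]].
  - set (h := fun k t => (-1) ^ k * g k (2 - t)).
    destruct (taylor_right h (fun t => t < 2)) with (y := 2 - y) as [z [Hz E]].
    + apply open_lt.
    + intros k t Ht Hk. unfold h.
      replace ((-1) ^ S k * g (S k) (2 - t)) with ((-1) ^ k * ((-1) * g (S k) (2 - t))) by (simpl; ring).
      apply is_derive_scal.
      apply (is_derive_comp (g k) (fun t => 2 - t) t (g (S k) (2 - t)) (-1)).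
      apply Hd; auto. lra.
      auto_derive; auto; ring.
    + lra.
    + intros; lra.
    + exists (2 - z). split.
      { rewrite Rmin_right, Rmax_left; lra. }
      unfold h in E. cbv beta in E. replace (2 - (2 - y)) with y in E by ring. replace (2 - 1) with 1 in E by ring.
      transitivity ((-1)^0 * g 0%nat y); [simpl; ring|]. rewrite E. field.
  - subst. exists 1. rewrite Rmin_left, Rmax_left by lra. split. lra. field.
  - destruct (taylor_right g (fun t => 0 < t)) with (y := y) as [z [Hz E]]; auto.
    + apply open_gt.
    + intros; lra.
    + exists z. rewrite Rmin_left, Rmax_right by lra. split. lra. auto.
Qed.


Definition Fd (d u : R) : R :=
  if Req_EM_T d 0 then 2 * ((1 + u) * ln (1 + u) - u)
  else 2 / (d * (d + 1)) * ((1 + u) * Rpower (1 + u) d - 1 - (d + 1) * u).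

Lemma psi_decomp d lam x : -1 < d -> 0 < lam ->
  psi d lam x = lam * Fd d ((x - lam) / lam) + 2 / (d + 1) * (x - lam).
Proof.
  intros Hd Hl. unfold psi, Fd.
  replace (1 + (x - lam) / lam) with (x / lam) by (field; lra).
  destruct (Req_EM_T d 0) as [->|Hn].
  - field. lra.
  - field. split; lra.
Qed.

Lemma Rpower_base1 q : Rpower 1 q = 1.
Proof. unfold Rpower. rewrite ln_1, Rmult_0_r. apply exp_0. Qed.

Lemma is_derive_rpow t q : 0 < t -> is_derive (fun s => Rpower s q) t (q * Rpower t (q - 1)).
Proof. intros. apply is_derive_Reals. apply derivable_pt_lim_power; auto. Qed.

Lemma is_derive_extR (f g : R -> R) x l : (forall t, f t = g t) -> is_derive f x l -> is_derive g x l.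
Proof. intros H. apply is_derive_ext. exact H. Qed.

Lemma isd_minus (f g : R -> R) x df dg : is_derive f x df -> is_derive g x dg ->
  is_derive (fun t => f t - g t) x (df - dg).
Proof. intros H1 H2. exact (is_derive_minus f g x df dg H1 H2). Qed.
Lemma isd_plus (f g : R -> R) x df dg : is_derive f x df -> is_derive g x dg ->
  is_derive (fun t => f t + g t) x (df + dg).
Proof. intros H1 H2. exact (is_derive_plus f g x df dg H1 H2). Qed.
Lemma isd_const (c x : R) : is_derive (fun _ => c) x 0.
Proof. exact (is_derive_const c x). Qed.
Lemma isd_id (x : R) : is_derive (fun t => t) x 1.
Proof. exact (is_derive_id x). Qed.

Definition gfam (d : R) (k : nat) (t : R) : R :=
  match k with
  | 0%nat => if Req_EM_T d 0 then 2 * (t * ln t - (t - 1))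
             else 2 / (d * (d + 1)) * (Rpower t (d + 1) - 1 - (d + 1) * (t - 1))
  | 1%nat => if Req_EM_T d 0 then 2 * ln t
             else 2 / (d * (d + 1)) * ((d + 1) * Rpower t d - (d + 1))
  | 2%nat => 2 * Rpower t (d - 1)
  | 3%nat => 2 * (d - 1) * Rpower t (d - 2)
  | 4%nat => 2 * (d - 1) * (d - 2) * Rpower t (d - 3)
  | _ => 2 * (d - 1) * (d - 2) * (d - 3) * Rpower t (d - 4)
  end.

Lemma gfam_der d : -1 < d -> forall k t, 0 < t -> (k <= 4)%nat ->
  is_derive (gfam d k) t (gfam d (S k) t).
Proof.
  intros Hd k t Ht Hk.
  destruct k as [|[|[|[|[|k]]]]]; try lia; unfold gfam.
  - destruct (Req_EM_T d 0) as [->|Hn].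
    + auto_derive. auto. field. lra.
    + apply is_derive_scal.
      apply (is_derive_extR (fun s => Rpower s (d + 1) - (1 + (d + 1) * (s - 1)))).
      { intros; ring. }
      replace ((d + 1) * Rpower t d - (d + 1)) with ((d + 1) * Rpower t (d + 1 - 1) - (d + 1) * 1)
        by (replace (d + 1 - 1) with d by ring; ring).
      apply isd_minus. apply is_derive_rpow; auto.
      apply (is_derive_extR (fun s => (1 + (d + 1) * s) - (d + 1))). intros; ring.
      replace ((d + 1) * 1) with (0 + (d + 1) * 1 - 0) by ring.
      apply isd_minus. apply isd_plus. apply isd_const.
      apply is_derive_scal. apply isd_id. apply isd_const.
  - destruct (Req_EM_T d 0) as [->|Hn].
    + replace (2 * Rpower t (0 - 1)) with (2 * / t).
      2:{ replace (0 - 1) with (- (1)) by ring. rewrite Rpower_Ropp, Rpower_1; auto. }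
      auto_derive. auto. field. lra.
    + replace (2 * Rpower t (d - 1)) with (2 / (d * (d + 1)) * ((d + 1) * (d * Rpower t (d - 1)) - 0))
        by (field; split; lra).
      apply is_derive_scal. apply isd_minus. apply is_derive_scal. apply is_derive_rpow; auto.
      apply isd_const.
  - replace (2 * (d - 1) * Rpower t (d - 2)) with (2 * ((d - 1) * Rpower t (d - 1 - 1)))
      by (replace (d - 1 - 1) with (d - 2) by ring; ring).
    apply is_derive_scal. apply is_derive_rpow; auto.
  - replace (2 * (d - 1) * (d - 2) * Rpower t (d - 3)) with (2 * (d - 1) * ((d - 2) * Rpower t (d - 2 - 1)))
      by (replace (d - 2 - 1) with (d - 3) by ring; ring).
    apply is_derive_scal. apply is_derive_rpow; auto.
  - replace (2 * (d - 1) * (d - 2) * (d - 3) * Rpower t (d - 4)) with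
      (2 * (d - 1) * (d - 2) * ((d - 3) * Rpower t (d - 3 - 1)))
      by (replace (d - 3 - 1) with (d - 4) by ring; ring).
    apply is_derive_scal. apply is_derive_rpow; auto.
Qed.

Lemma Fd_gfam d u : -1 < d -> -1 < u -> Fd d u = gfam d 0 (1 + u).
Proof.
  intros Hd Hu. unfold Fd, gfam. destruct (Req_EM_T d 0) as [->|Hn].
  - ring.
  - rewrite Rpower_plus, Rpower_1 by lra. ring.
Qed.

Lemma rpow_bnd z q lo hi M : 0 < lo <= z -> z <= hi -> 1 <= hi -> q <= INR M ->
  Rpower z q <= Rpower lo q + hi ^ M.
Proof.
  intros Hz Hh H1 HM. destruct (Rle_dec 0 q) as [Hq|Hq].
  - assert (Rpower z q <= Rpower hi q) by (apply Rle_Rpower_l; auto; lra).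
    assert (Rpower hi q <= Rpower hi (INR M)) by (apply Rle_Rpower; auto).
    rewrite Rpower_pow in H0 by lra.
    assert (0 < Rpower lo q) by (unfold Rpower; apply exp_pos). lra.
  - replace q with (- (- q)) by ring. rewrite (Rpower_Ropp z (- q)), (Rpower_Ropp lo (- q)).
    assert (Rpower lo (- q) <= Rpower z (- q)) by (apply Rle_Rpower_l; lra).
    assert (0 < Rpower lo (- q)) by (unfold Rpower; apply exp_pos).
    assert (/ Rpower z (- q) <= / Rpower lo (- q)) by (apply Rinv_le_contravar; auto).
    assert (0 <= hi ^ M) by (apply pow_le; lra). lra.
Qed.

Lemma ylny y : 0 < y <= 1 -> Rabs (y * ln y) <= 1.
Proof.
  intros Hy. assert (ln y <= 0).
  { destruct (Req_dec y 1) as [->|]. rewrite ln_1; lra. left. rewrite <- ln_1. apply ln_increasing; lra. }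
  assert (ln (/ y) <= / y - 1).
  { pose proof (exp_ineq1_le (ln (/ y))). rewrite exp_ln in H0. lra.
    apply Rinv_0_lt_compat; lra. }
  rewrite ln_Rinv in H0 by lra.
  assert (y * (- ln y) <= y * (/ y - 1)) by (apply Rmult_le_compat_l; lra).
  replace (y * (/ y - 1)) with (1 - y) in H1 by (field; lra).
  rewrite Rabs_left1 by nra. nra.
Qed.

Lemma rpow_le1 y q : 0 < y <= 1 -> 0 <= q -> Rpower y q <= 1.
Proof.
  intros Hy Hq. unfold Rpower. rewrite <- exp_0. 
  assert (ln y <= 0).
  { destruct (Req_dec y 1) as [->|]. rewrite ln_1; lra. left. rewrite <- ln_1. apply ln_increasing; lra. }
  destruct (Req_dec (q * ln y) 0) as [E|E]. rewrite E; lra.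
  left. apply exp_increasing. nra.
Qed.

Lemma gfam_at1 d : gfam d 0 1 = 0 /\ gfam d 1 1 = 0 /\ gfam d 2 1 = 2 /\
  gfam d 3 1 = 2 * (d - 1) /\ gfam d 4 1 = 2 * (d - 1) * (d - 2).
Proof.
  unfold gfam. rewrite !Rpower_base1. destruct (Req_EM_T d 0); rewrite ?ln_1; repeat split; ring.
Qed.

Lemma Fd_small d u : -1 < d -> -1 <= u <= 0 ->
  Rabs (Fd d u) <= Rabs (2 / (d * (d + 1))) * (2 + Rabs (d + 1)) + 4.
Proof.
  intros Hd Hu. assert (0 <= Rabs (2 / (d * (d + 1))) * (2 + Rabs (d + 1))).
  { apply Rmult_le_pos. apply Rabs_pos. generalize (Rabs_pos (d+1)); lra. }
  unfold Fd. destruct (Req_EM_T d 0) as [->|Hn].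
  - destruct (Req_dec (1 + u) 0) as [E|E].
    + rewrite E, Rmult_0_l. apply Rle_trans with 4; [apply Rabs_le; lra | lra].
    + pose proof (ylny (1 + u) ltac:(lra)). rewrite Rabs_mult, (Rabs_pos_eq 2) by lra.
      pose proof (Rabs_triang ((1 + u) * ln (1 + u)) (- u)).
      rewrite Rabs_Ropp, (Rabs_left1 u) in H1 by lra. unfold Rminus. lra.
  - assert (Hb : Rabs ((1 + u) * Rpower (1 + u) d) <= 1).
    { destruct (Req_dec (1 + u) 0) as [E|E].
      + rewrite E, Rmult_0_l, Rabs_R0; lra.
      + replace ((1 + u) * Rpower (1 + u) d) with (Rpower (1 + u) (d + 1)).
        2:{ rewrite Rpower_plus, Rpower_1 by lra. ring. }
        rewrite Rabs_pos_eq. apply rpow_le1; lra. left; unfold Rpower; apply exp_pos. }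
    rewrite Rabs_mult. 
    assert (Rabs ((1 + u) * Rpower (1 + u) d - 1 - (d + 1) * u) <= 2 + Rabs (d + 1)).
    { eapply Rle_trans. unfold Rminus. apply Rabs_triang. rewrite Rabs_Ropp, Rabs_mult.
      eapply Rle_trans. apply Rplus_le_compat_r. apply Rabs_triang. rewrite Rabs_Ropp, Rabs_R1.
      assert (Rabs u <= 1) by (apply Rabs_le; lra).
      assert (Rabs (d + 1) * Rabs u <= Rabs (d + 1)).
      { rewrite <- (Rmult_1_r (Rabs (d + 1))) at 2. apply Rmult_le_compat_l; auto; apply Rabs_pos. }
      lra. }
    assert (Rabs (2 / (d * (d + 1))) * Rabs ((1 + u) * Rpower (1 + u) d - 1 - (d + 1) * u) <=
            Rabs (2 / (d * (d + 1))) * (2 + Rabs (d + 1))) by (apply Rmult_le_compat_l; auto; apply Rabs_pos).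
    lra.
Qed.

Lemma pow_le1 t n : 0 <= t <= 1 -> t ^ n <= 1.
Proof. intros H. rewrite <- (pow1 n). apply pow_incr. auto. Qed.

Lemma Rabs_sub_le a b : Rabs (a - b) <= Rabs a + Rabs b.
Proof. unfold Rminus. rewrite <- (Rabs_Ropp b). apply Rabs_triang. Qed.

Lemma Fd_bound d : -1 < d -> exists K M, 0 <= K /\ forall u, -1 <= u ->
  Rabs (Fd d u - (u ^ 2 + (d - 1) / 3 * u ^ 3 + (d - 1) * (d - 2) / 12 * u ^ 4))
    <= K * Rabs u ^ 5 * (1 + Rabs u) ^ M.
Proof.
  intros Hd. destruct (INR_unbounded d) as [M HM].
  set (K1 := Rabs (2 * (d - 1) * (d - 2) * (d - 3)) / 120 * (Rpower (/ 2) (d - 4) + 1)).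
  set (B := Rabs (2 / (d * (d + 1))) * (2 + Rabs (d + 1)) + 4 + 1 + Rabs ((d - 1) / 3)
            + Rabs ((d - 1) * (d - 2) / 12)).
  assert (HK1 : 0 <= K1).
  { unfold K1. apply Rmult_le_pos. apply Rmult_le_pos. apply Rabs_pos. lra.
    assert (0 < Rpower (/ 2) (d - 4)) by (unfold Rpower; apply exp_pos). lra. }
  assert (HB : 0 <= B).
  { unfold B. generalize (Rabs_pos (2 / (d * (d + 1)))) (Rabs_pos (d + 1)) (Rabs_pos ((d - 1) / 3))
      (Rabs_pos ((d - 1) * (d - 2) / 12)). intros. 
    assert (0 <= Rabs (2 / (d * (d + 1))) * (2 + Rabs (d + 1))) by (apply Rmult_le_pos; lra). lra. }
  exists (K1 + 32 * B), M. split; [lra|]. intros u Hu.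
  assert (Hh : 1 <= (1 + Rabs u) ^ M) by (apply pow_R1_Rle; generalize (Rabs_pos u); lra).
  assert (Hu5 : 0 <= Rabs u ^ 5) by (apply pow_le, Rabs_pos).
  destruct (Rle_dec (- / 2) u) as [Hbig|Hsmall].
  - rewrite Fd_gfam by lra.
    destruct (taylor5 (gfam d) (gfam_der d Hd) (1 + u) ltac:(lra)) as [z [Hz E]].
    rewrite E. destruct (gfam_at1 d) as [G0 [G1 [G2 [G3 G4]]]]. rewrite G0, G1, G2, G3, G4.
    replace (1 + u - 1) with u by ring.
    replace (0 + u * 0 + u ^ 2 / 2 * 2 + u ^ 3 / 6 * (2 * (d - 1)) + u ^ 4 / 24 * (2 * (d - 1) * (d - 2))
      + u ^ 5 / 120 * gfam d 5 z - (u ^ 2 + (d - 1) / 3 * u ^ 3 + (d - 1) * (d - 2) / 12 * u ^ 4))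
      with (u ^ 5 * (2 * (d - 1) * (d - 2) * (d - 3)) / 120 * Rpower z (d - 4)) by (simpl gfam; field).
    assert (Hz1 : / 2 <= z).
    { destruct Hz as [Hz _]. eapply Rle_trans; [|exact Hz]. apply Rmin_glb; lra. }
    assert (Hz2 : z <= 1 + Rabs u).
    { destruct Hz as [_ Hz]. eapply Rle_trans; [exact Hz|]. apply Rmax_lub.
      generalize (Rabs_pos u); lra. generalize (Rle_abs u); lra. }
    assert (Hp : 0 < Rpower z (d - 4)) by (unfold Rpower; apply exp_pos).
    assert (Hr : Rpower z (d - 4) <= Rpower (/ 2) (d - 4) + (1 + Rabs u) ^ M).
    { apply rpow_bnd; try lra. generalize (Rabs_pos u); lra. }
    rewrite Rabs_mult, Rabs_div, (Rabs_pos_eq (Rpower _ _)) by lra.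
    rewrite Rabs_mult, <- RPow_abs, (Rabs_pos_eq 120) by lra.
    assert (Rpower z (d - 4) <= (Rpower (/ 2) (d - 4) + 1) * (1 + Rabs u) ^ M).
    { assert (0 < Rpower (/ 2) (d - 4)) by (unfold Rpower; apply exp_pos). nra. }
    assert (Rabs u ^ 5 * Rabs (2 * (d - 1) * (d - 2) * (d - 3)) / 120 * Rpower z (d - 4) <=
            K1 * Rabs u ^ 5 * (1 + Rabs u) ^ M).
    { unfold K1. 
      replace (Rabs (2 * (d - 1) * (d - 2) * (d - 3)) / 120 * (Rpower (/ 2) (d - 4) + 1) * Rabs u ^ 5 *
         (1 + Rabs u) ^ M) with
        (Rabs u ^ 5 * Rabs (2 * (d - 1) * (d - 2) * (d - 3)) / 120 *
          ((Rpower (/ 2) (d - 4) + 1) * (1 + Rabs u) ^ M)) by field.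
      apply Rmult_le_compat_l; auto.
      apply Rmult_le_pos. apply Rmult_le_pos; auto. apply Rabs_pos. lra. }
    assert (0 <= 32 * B * Rabs u ^ 5 * (1 + Rabs u) ^ M).
    { apply Rmult_le_pos. apply Rmult_le_pos; lra. lra. }
    lra.
  - assert (Hu2 : -1 <= u <= 0) by lra.
    assert (HF := Fd_small d u Hd Hu2).
    assert (Hau : Rabs u <= 1) by (apply Rabs_le; lra).
    assert (Hau2 : / 2 <= Rabs u) by (rewrite Rabs_left1; lra).
    assert (Hpoly : Rabs (u ^ 2 + (d - 1) / 3 * u ^ 3 + (d - 1) * (d - 2) / 12 * u ^ 4) <=
       1 + Rabs ((d - 1) / 3) + Rabs ((d - 1) * (d - 2) / 12)).
    { eapply Rle_trans. apply Rabs_triang. eapply Rle_trans. apply Rplus_le_compat_r. apply Rabs_triang.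
      rewrite !Rabs_mult, <- !RPow_abs.
      assert (Rabs u ^ 2 <= 1) by (apply pow_le1; split; [apply Rabs_pos|auto]).
      assert (Rabs u ^ 3 <= 1) by (apply pow_le1; split; [apply Rabs_pos|auto]).
      assert (Rabs u ^ 4 <= 1) by (apply pow_le1; split; [apply Rabs_pos|auto]).
      generalize (Rabs_pos ((d - 1) / 3)) (Rabs_pos ((d - 1) * (d - 2) / 12)). nra. }
    assert (Hd1 : Rabs (Fd d u - (u ^ 2 + (d - 1) / 3 * u ^ 3 + (d - 1) * (d - 2) / 12 * u ^ 4)) <= B).
    { eapply Rle_trans. apply Rabs_sub_le. unfold B. lra. }
    assert (H32 : 1 <= 32 * Rabs u ^ 5).
    { assert ((/ 2) ^ 5 <= Rabs u ^ 5) by (apply pow_incr; lra). 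
      replace ((/2)^5) with (/ 32) in H by field. lra. }
    assert (B <= 32 * B * Rabs u ^ 5 * (1 + Rabs u) ^ M).
    { replace (32 * B * Rabs u ^ 5 * (1 + Rabs u) ^ M) with (B * ((32 * Rabs u ^ 5) * (1 + Rabs u) ^ M)) by ring.
      rewrite <- (Rmult_1_r B) at 1. apply Rmult_le_compat_l; auto. nra. }
    assert (0 <= K1 * Rabs u ^ 5 * (1 + Rabs u) ^ M).
    { apply Rmult_le_pos. apply Rmult_le_pos; lra. lra. }
    lra.
Qed.


Definition Uf (lam x : R) : R := (x - lam) / lam.
Definition Um (lam : R) (j : nat) : R := pois_E lam (fun x => Uf lam x ^ j).

Lemma good_U lam : good (Uf lam).
Proof. unfold Uf. apply (good_le _ (fun x => / lam * (x - lam))). intros; unfold Rdiv; rewrite Rmult_comm; lra.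
  apply good_scal, good_Y1. Qed.

Lemma Um_mu lam j : 0 < lam -> Um lam j = mu lam j * (/ lam) ^ j.
Proof.
  intros Hl. unfold Um, mu, Uf. rewrite (E_ext lam _ (fun x => (/ lam) ^ j * (x - lam) ^ j)).
  rewrite E_scal; ring. intros; unfold Rdiv; rewrite Rpow_mult_distr; ring.
Qed.

Lemma Um0 lam : 0 < lam -> Um lam 0 = (let x := / lam in 1).
Proof. intros Hl. rewrite Um_mu by auto. rewrite mu0. cbv zeta. field. lra. Qed.

Lemma Um1 lam : 0 < lam -> Um lam 1 = (let x := / lam in 0).
Proof. intros Hl. rewrite Um_mu by auto. rewrite mu1 by lra. cbv zeta. field. lra. Qed.

Lemma Um2 lam : 0 < lam -> Um lam 2 = (let x := / lam in x).
Proof. intros Hl. rewrite Um_mu by auto. rewrite mu2 by lra. cbv zeta. field. lra. Qed.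

Lemma Um3 lam : 0 < lam -> Um lam 3 = (let x := / lam in x^2).
Proof. intros Hl. rewrite Um_mu by auto. rewrite mu3 by lra. cbv zeta. field. lra. Qed.

Lemma Um4 lam : 0 < lam -> Um lam 4 = (let x := / lam in 3*x^2+x^3).
Proof. intros Hl. rewrite Um_mu by auto. rewrite mu4 by lra. cbv zeta. field. lra. Qed.

Lemma Um5 lam : 0 < lam -> Um lam 5 = (let x := / lam in 10*x^3+x^4).
Proof. intros Hl. rewrite Um_mu by auto. rewrite mu5 by lra. cbv zeta. field. lra. Qed.

Lemma Um6 lam : 0 < lam -> Um lam 6 = (let x := / lam in 15*x^3+25*x^4+x^5).
Proof. intros Hl. rewrite Um_mu by auto. rewrite mu6 by lra. cbv zeta. field. lra. Qed.

Lemma Um7 lam : 0 < lam -> Um lam 7 = (let x := / lam in 105*x^4+56*x^5+x^6).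
Proof. intros Hl. rewrite Um_mu by auto. rewrite mu7 by lra. cbv zeta. field. lra. Qed.

Lemma Um8 lam : 0 < lam -> Um lam 8 = (let x := / lam in 105*x^4+490*x^5+119*x^6+x^7).
Proof. intros Hl. rewrite Um_mu by auto. rewrite mu8 by lra. cbv zeta. field. lra. Qed.

Lemma onept t M : 0 <= t -> (1 + t) ^ (2 * M) <= 4 ^ M * (1 + t ^ (2 * M)).
Proof.
  intros Ht. rewrite !pow_mult. destruct (Rle_dec t 1) as [H|H].
  - assert ((1 + t) ^ 2 <= 4) by nra.
    assert (((1 + t) ^ 2) ^ M <= 4 ^ M) by (apply pow_incr; split; [nra|auto]).
    assert (0 <= (t ^ 2) ^ M) by (apply pow_le; nra).
    assert (0 <= 4 ^ M) by (apply pow_le; lra). nra.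
  - assert ((1 + t) ^ 2 <= 4 * t ^ 2) by nra.
    assert (((1 + t) ^ 2) ^ M <= (4 * t ^ 2) ^ M) by (apply pow_incr; split; [nra|auto]).
    rewrite Rpow_mult_distr in H1.
    assert (0 <= 4 ^ M) by (apply pow_le; lra). nra.
Qed.

Lemma Um_even_bound k : exists c, 0 <= c /\ forall lam, 1 <= lam -> forall i, (i <= k)%nat ->
  Um lam (2 * i) <= c * (/ lam) ^ i.
Proof.
  destruct (mu_bound (2 * k)) as [c [Hc H]]. exists c. split; auto.
  intros lam Hl i Hi. rewrite Um_mu by lra.
  specialize (H lam Hl (2 * i)%nat ltac:(lia)). rewrite Nat.div2_double in H.
  assert (mu lam (2 * i) <= c * lam ^ i) by (eapply Rle_trans; [apply Rle_abs|auto]).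
  assert (0 < (/ lam) ^ (2 * i)) by (apply pow_lt, Rinv_0_lt_compat; lra).
  eapply Rle_trans. apply Rmult_le_compat_r. lra. exact H0.
  rewrite pow_mult. replace (((/ lam) ^ 2) ^ i) with ((/ lam) ^ i * (/ lam) ^ i).
  2:{ rewrite <- Rpow_mult_distr. f_equal. ring. }
  replace (c * lam ^ i * ((/ lam) ^ i * (/ lam) ^ i)) with (c * (lam * / lam) ^ i * (/ lam) ^ i).
  2:{ rewrite Rpow_mult_distr. ring. }
  rewrite Rinv_r by lra. rewrite pow1. lra.
Qed.

Definition Phi lam M j x := Uf lam x ^ (2 * j) * (1 + Rabs (Uf lam x)) ^ (2 * M).

Lemma good_Phi lam M j : good (Phi lam M j).
Proof.
  unfold Phi. apply good_mul. apply good_pow, good_U. apply good_pow. apply good_add.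
  apply good_const. apply good_abs, good_U.
Qed.

Lemma Phi_bound M : exists c, 0 <= c /\ forall lam, 1 <= lam -> forall j, (j <= 5)%nat ->
  pois_E lam (Phi lam M j) <= c * (/ lam) ^ j.
Proof.
  destruct (Um_even_bound (5 + M)) as [c [Hc H]].
  exists (4 ^ M * (2 * c)). split. apply Rmult_le_pos. apply pow_le; lra. lra.
  intros lam Hl j Hj.
  assert (E1 : pois_E lam (Phi lam M j) <=
     pois_E lam (fun x => 4 ^ M * (Uf lam x ^ (2 * j) + Uf lam x ^ (2 * (j + M))))).
  { apply E_le; try lra. apply good_Phi. apply good_scal, good_add; apply good_pow, good_U.
    intros k. unfold Phi. set (u := Uf lam (INR k)).
    pose proof (onept (Rabs u) M (Rabs_pos u)).
    rewrite RPow_abs in H0. rewrite (Rabs_pos_eq (u ^ (2 * M))) in H0.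
    2:{ rewrite pow_mult. apply pow_le. nra. }
    assert (0 <= u ^ (2 * j)) by (rewrite pow_mult; apply pow_le; nra).
    replace (u ^ (2 * (j + M))) with (u ^ (2 * j) * u ^ (2 * M)) by (rewrite <- pow_add; f_equal; lia).
    replace (4 ^ M * (u ^ (2 * j) + u ^ (2 * j) * u ^ (2 * M))) with (u ^ (2 * j) * (4 ^ M * (1 + u ^ (2 * M)))) by ring.
    apply Rmult_le_compat_l; auto. }
  rewrite E_scal, E_add in E1; try lra; try (apply good_pow, good_U).
  fold (Um lam (2 * j)) in E1. fold (Um lam (2 * (j + M))) in E1.
  pose proof (H lam Hl j ltac:(lia)). pose proof (H lam Hl (j + M)%nat ltac:(lia)).
  assert (0 < / lam) by (apply Rinv_0_lt_compat; lra).
  assert (/ lam <= 1) by (rewrite <- Rinv_1; apply Rinv_le_contravar; lra).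
  assert ((/ lam) ^ (j + M) <= (/ lam) ^ j).
  { rewrite pow_add. rewrite <- (Rmult_1_r ((/ lam) ^ j)) at 2. apply Rmult_le_compat_l.
    apply pow_le; lra. apply pow_le1; lra. }
  assert (0 <= 4 ^ M) by (apply pow_le; lra).
  eapply Rle_trans; [exact E1|].
  replace (4 ^ M * (2 * c) * (/ lam) ^ j) with (4 ^ M * (c * (/ lam) ^ j + c * (/ lam) ^ j)) by ring.
  apply Rmult_le_compat_l; auto.
  assert (c * (/ lam) ^ (j + M) <= c * (/ lam) ^ j) by (apply Rmult_le_compat_l; auto). lra.
Qed.


Fixpoint lc (l : list (R * (R -> R))) (x : R) : R :=
  match l with [] => 0 | (c, f) :: l' => c * f x + lc l' x end.
Fixpoint lcE lam (l : list (R * (R -> R))) : R :=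
  match l with [] => 0 | (c, f) :: l' => c * pois_E lam f + lcE lam l' end.
Fixpoint allgood (l : list (R * (R -> R))) : Prop :=
  match l with [] => True | (c, f) :: l' => good f /\ allgood l' end.

Lemma good_lc l : allgood l -> good (lc l).
Proof.
  induction l as [|[c f] l IH]; simpl; intros.
  - apply good_const.
  - destruct H. apply good_add. apply good_scal; auto. apply IH; auto.
Qed.

Lemma E_lc lam l : 0 <= lam -> allgood l -> pois_E lam (lc l) = lcE lam l.
Proof.
  intros Hl. induction l as [|[c f] l IH]; simpl; intros.
  - change (lc []) with (fun _ : R => 0). apply E_const.
  - destruct H. change (lc ((c, f) :: l)) with (fun x => c * f x + lc l x).
    rewrite E_add; auto. rewrite E_scal, IH; auto. apply good_scal; auto. apply good_lc; auto.
Qed.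

Lemma rho_formula lam (F h : R -> R) (A : R) : 0 < lam ->
  good (fun x => F (Uf lam x)) ->
  (forall x, h x = lam * F (Uf lam x) + A * (x - lam)) ->
  let f1 := fun x => F (Uf lam x) in
  let mF := pois_E lam f1 in
  let e1 := pois_E lam (fun x => f1 x * Uf lam x ^ 1) in
  let e3 := pois_E lam (fun x => f1 x * Uf lam x ^ 2) in
  let s2 := pois_E lam (fun x => f1 x ^ 2) in
  let Q := s2 - mF ^ 2 - lam * e1 ^ 2 in
  let e2 := e3 - / lam * e1 - / lam * mF in
  0 < Q ->
  rho h lam = lam * e2 / sqrt (2 * Q).
Proof.
  intros Hl Hg Hh f1 mF e1 e3 s2 Q e2 HQ.
  assert (Hl0 : 0 <= lam) by lra.
  set (b1 := fun _ : R => 1).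
  set (bU := fun x => Uf lam x ^ 1). set (bU2 := fun x => Uf lam x ^ 2).
  set (bU3 := fun x => Uf lam x ^ 3). set (bU4 := fun x => Uf lam x ^ 4).
  set (bF := f1). set (bFU := fun x => f1 x * Uf lam x ^ 1).
  set (bFU2 := fun x => f1 x * Uf lam x ^ 2). set (bFF := fun x => f1 x ^ 2).
  assert (G1 : good b1) by apply good_const.
  assert (GU : forall j, good (fun x => Uf lam x ^ j)) by (intros; apply good_pow, good_U).
  assert (GF : good bF) by exact Hg.
  assert (GFU : good bFU) by (apply good_mul; auto).
  assert (GFU2 : good bFU2) by (apply good_mul; auto).
  assert (GFF : good bFF) by (apply good_pow; auto).
  assert (Eb1 : pois_E lam b1 = 1) by apply E_one.
  assert (EbU : pois_E lam bU = 0) by (apply (Um1 lam Hl)).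
  assert (EbU2 : pois_E lam bU2 = / lam) by (apply (Um2 lam Hl)).
  assert (EbU3 : pois_E lam bU3 = (/ lam) ^ 2) by (apply (Um3 lam Hl)).
  assert (EbU4 : pois_E lam bU4 = 3 * (/ lam) ^ 2 + (/ lam) ^ 3) by (apply (Um4 lam Hl)).
  assert (Hx : forall x, x = lam + lam * Uf lam x) by (intros; unfold Uf; field; lra).
  assert (Hr : r_coef h lam = lam * e1 + A).
  { unfold r_coef, pois_cov.
    rewrite (E_ext lam (fun x => h x * x) (lc [(lam^2, bF); (lam^2, bFU); (A*lam^2, bU); (A*lam^2, bU2)])).
    2:{ intros k. rewrite Hh. simpl. unfold bF, bFU, bU, bU2, f1. unfold Uf. field. lra. }
    rewrite (E_ext lam h (lc [(lam, bF); (A*lam, bU)])).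
    2:{ intros k. rewrite Hh. simpl. unfold bF, bU, f1. unfold Uf. field. lra. }
    rewrite (E_ext lam (fun x => x) (lc [(lam, b1); (lam, bU)])).
    2:{ intros k. simpl. unfold b1, bU. unfold Uf. field. lra. }
    rewrite !E_lc by (simpl; repeat split; try apply GU; auto). simpl.
    fold mF. change (pois_E lam bFU) with e1. rewrite Eb1, EbU, EbU2. field. lra. }
  unfold rho. rewrite Hr. set (r := lam * e1 + A).
  unfold pois_corr, pois_var, pois_cov.
  set (a1 := A * lam - r * lam).
  rewrite (E_ext lam (fun x => (h x - r * x) * (x ^ 2 - (2 * lam + 1) * x))
    (lc [(lam^3, bFU2); (-lam^2, bFU); (-(lam^3+lam^2), bF); (a1*lam^2, bU3);
         (-a1*lam - r*lam^3, bU2); (-a1*(lam^2+lam) + r*lam^2, bU); (r*lam*(lam^2+lam), b1)])).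
  2:{ intros k. rewrite Hh. simpl. unfold bF, bFU, bFU2, bU, bU2, bU3, b1, f1, a1.
      unfold Uf. field. lra. }
  rewrite (E_ext lam (fun x => h x - r * x) (lc [(lam, bF); (a1, bU); (-r*lam, b1)])).
  2:{ intros k. rewrite Hh. simpl. unfold bF, bU, b1, f1, a1. unfold Uf. field. lra. }
  rewrite (E_ext lam (fun x => x ^ 2 - (2 * lam + 1) * x)
    (lc [(lam^2, bU2); (-lam, bU); (-(lam^2+lam), b1)])).
  2:{ intros k. simpl. unfold bU, bU2, b1. unfold Uf. field. lra. }
  rewrite (E_ext lam (fun x => (h x - r * x) * (h x - r * x))
    (lc [(lam^2, bFF); (2*lam*a1, bFU); (-2*r*lam^2, bF); (a1^2, bU2); (-2*r*lam*a1, bU); (r^2*lam^2, b1)])).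
  2:{ intros k. rewrite Hh. simpl. unfold bF, bFU, bFF, bU, bU2, b1, f1, a1.
      unfold Uf. field. lra. }
  rewrite (E_ext lam (fun x => (x ^ 2 - (2 * lam + 1) * x) * (x ^ 2 - (2 * lam + 1) * x))
    (lc [(lam^4, bU4); (-2*lam^3, bU3); (lam^2 - 2*lam^2*(lam^2+lam), bU2); (2*lam*(lam^2+lam), bU);
         ((lam^2+lam)^2, b1)])).
  2:{ intros k. simpl. unfold bU, bU2, bU3, bU4, b1. unfold Uf. field. lra. }
  rewrite !E_lc by (simpl; repeat split; try apply GU; auto). simpl.
  fold mF. change (pois_E lam bFU) with e1. change (pois_E lam bFU2) with e3. change (pois_E lam bFF) with s2.
  rewrite Eb1, EbU, EbU2, EbU3, EbU4.
  change (pois_E lam bF) with mF.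
  match goal with |- ?N / sqrt (?V1 * ?V2) = _ =>
    replace N with (lam ^ 3 * e2) by (unfold e2, a1, r; field; lra);
    replace V1 with (lam ^ 2 * Q) by (unfold Q, a1, r; field; lra);
    replace V2 with (lam ^ 2 * 2) by (field; lra) end.
  replace (lam ^ 2 * Q * (lam ^ 2 * 2)) with ((lam ^ 2) ^ 2 * (2 * Q)) by ring.
  rewrite sqrt_mult_alt by (apply pow_le; nra).
  rewrite sqrt_pow2 by (apply pow_le; lra).
  assert (0 < sqrt (2 * Q)) by (apply sqrt_lt_R0; lra).
  field. lra.
Qed.


Lemma Rabs_sub_le2 a b : Rabs (a - b) <= Rabs a + Rabs b.
Proof. unfold Rminus. rewrite <- (Rabs_Ropp b). apply Rabs_triang. Qed.

Lemma abs_btw z c : Rabs z <= c -> - c <= z <= c.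
Proof. intros H. destruct (Rcase_abs z) as [Hz|Hz]; [rewrite Rabs_left in H|rewrite Rabs_right in H]; lra. Qed.

Lemma final_alg (x a Q T e2 rho Cq Ct : R) :
  0 < x -> x <= 1 -> 0 <= Cq -> Cq * x <= 1 ->
  Rabs (Q - 2 * x ^ 2) <= Cq * x ^ 3 ->
  Rabs (T - 12 * a ^ 2 * x ^ 3) <= Ct * x ^ 4 ->
  T = 2 * Q - (e2 / x) ^ 2 -> 0 < e2 ->
  rho = e2 / x / sqrt (2 * Q) ->
  (3 * a ^ 2 + (Ct + 6 * a ^ 2 * Cq) / 2) * x <= / 2 ->
  Rabs (rho - (1 - 3 * a ^ 2 * x / 2)) <=
    ((3 * a ^ 2 + (Ct + 6 * a ^ 2 * Cq) / 2) ^ 2 / 3 + (Ct + 6 * a ^ 2 * Cq) / 2 / 2) * x ^ 2.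
Proof.
  intros Hx Hx1 HCq HCqx HQ HT ET He2 Erho Hsmall.
  assert (Hx4 : 0 < x ^ 4) by (apply pow_lt; lra).
  assert (HCt : 0 <= Ct).
  { pose proof (Rabs_pos (T - 12 * a ^ 2 * x ^ 3)). 
    destruct (Rle_dec 0 Ct); auto. assert (Ct * x ^ 4 < 0) by nra. lra. }
  set (C' := (Ct + 6 * a ^ 2 * Cq) / 2) in *.
  assert (HC' : 0 <= C') by (unfold C'; assert (0 <= a ^ 2) by nra; nra).
  assert (Hx3 : 0 < x ^ 3) by (apply pow_lt; lra).
  assert (Hx2 : 0 < x ^ 2) by (apply pow_lt; lra).
  assert (HQ1 : x ^ 2 <= Q).
  { apply abs_btw in HQ. 
    assert (Cq * x ^ 3 <= x ^ 2).
    { replace (Cq * x ^ 3) with ((Cq * x) * x ^ 2) by ring.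
      rewrite <- (Rmult_1_l (x ^ 2)) at 2. apply Rmult_le_compat_r; lra. }
    lra. }
  assert (HQp : 0 < Q) by lra.
  set (s := T / (2 * Q)).
  assert (Hsq : 0 < sqrt (2 * Q)) by (apply sqrt_lt_R0; lra).
  assert (Hrho_pos : 0 < rho).
  { rewrite Erho. apply Rdiv_lt_0_compat; auto. apply Rdiv_lt_0_compat; auto. }
  assert (Hrho2 : rho ^ 2 = 1 - s).
  { rewrite Erho. unfold s. rewrite ET.
    replace ((e2 / x / sqrt (2 * Q)) ^ 2) with ((e2 / x) ^ 2 / (sqrt (2 * Q)) ^ 2) by (field; lra).
    rewrite pow2_sqrt by lra. field. lra. }
  assert (Hs1 : Rabs (s - 3 * a ^ 2 * x) <= C' * x ^ 2).
  { unfold s. replace (T / (2 * Q) - 3 * a ^ 2 * x) with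
      (((T - 12 * a ^ 2 * x ^ 3) - 6 * a ^ 2 * x * (Q - 2 * x ^ 2)) / (2 * Q)) by (field; lra).
    rewrite Rabs_div by lra. rewrite (Rabs_pos_eq (2 * Q)) by lra.
    apply Rle_div_l. lra.
    eapply Rle_trans. apply Rabs_sub_le2.
    rewrite Rabs_mult, (Rabs_pos_eq (6 * a ^ 2 * x)) by (assert (0 <= a ^ 2) by nra; nra).
    assert (0 <= 6 * a ^ 2 * x) by (assert (0 <= a ^ 2) by nra; nra).
    assert (6 * a ^ 2 * x * Rabs (Q - 2 * x ^ 2) <= 6 * a ^ 2 * x * (Cq * x ^ 3)) by (apply Rmult_le_compat_l; auto).
    assert (C' * x ^ 2 * (2 * x ^ 2) <= C' * x ^ 2 * (2 * Q)) by (apply Rmult_le_compat_l; nra).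
    assert (Ct * x ^ 4 + 6 * a ^ 2 * x * (Cq * x ^ 3) = C' * x ^ 2 * (2 * x ^ 2)) by (unfold C'; field).
    lra. }
  assert (Hs2 : Rabs s <= (3 * a ^ 2 + C') * x).
  { assert (C' * x ^ 2 <= C' * x) by (apply Rmult_le_compat_l; auto; nra).
    assert (Rabs (3 * a ^ 2 * x) = 3 * a ^ 2 * x) by (apply Rabs_pos_eq; assert (0 <= a ^ 2) by nra; nra).
    pose proof (Rabs_triang (s - 3 * a ^ 2 * x) (3 * a ^ 2 * x)).
    replace (s - 3 * a ^ 2 * x + 3 * a ^ 2 * x) with s in H1 by ring. lra. }
  assert (Hs3 : Rabs s <= / 2) by lra.
  set (t := 1 - s / 2).
  assert (Ht : 3 / 4 <= t) by (unfold t; apply abs_btw in Hs3; lra).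
  assert (Hrt : Rabs (rho - t) <= s ^ 2 / 3).
  { assert (Hpt : 0 < rho + t) by lra.
    assert (E : rho - t = - (s ^ 2 / 4) / (rho + t)).
    { apply Rmult_eq_reg_r with (rho + t); [|lra].
      replace ((rho - t) * (rho + t)) with (rho ^ 2 - t ^ 2) by ring. rewrite Hrho2.
      unfold t. field; unfold t in Hpt; lra. }
    rewrite E. rewrite Rabs_div by lra. rewrite Rabs_Ropp, (Rabs_pos_eq (rho + t)) by lra.
    rewrite Rabs_pos_eq by (assert (0 <= s ^ 2) by nra; lra).
    apply Rle_div_l. lra. assert (0 <= s ^ 2) by nra. nra. }
  assert (Hfin : Rabs (t - (1 - 3 * a ^ 2 * x / 2)) = Rabs (s - 3 * a ^ 2 * x) / 2).
  { unfold t. replace (1 - s / 2 - (1 - 3 * a ^ 2 * x / 2)) with (- ((s - 3 * a ^ 2 * x) / 2)) by field.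
    rewrite Rabs_Ropp, Rabs_div, (Rabs_pos_eq 2) by lra. auto. }
  assert (Hss : s ^ 2 <= ((3 * a ^ 2 + C') * x) ^ 2).
  { rewrite <- (pow2_abs s). 
    assert (0 <= Rabs s) by apply Rabs_pos. apply pow_incr. lra. }
  pose proof (Rabs_triang (rho - t) (t - (1 - 3 * a ^ 2 * x / 2))).
  replace (rho - t + (t - (1 - 3 * a ^ 2 * x / 2))) with (rho - (1 - 3 * a ^ 2 * x / 2)) in H by ring.
  rewrite Rpow_mult_distr in Hss. nra.
Qed.


Fixpoint sumabs (l : list R) : R := match l with [] => 0 | c :: l' => Rabs c + sumabs l' end.

Lemma sumabs_nonneg l : 0 <= sumabs l.
Proof. induction l; simpl. lra. generalize (Rabs_pos a); lra. Qed.

Lemma pe_bound l x : 0 <= x <= 1 -> Rabs (pe l x) <= sumabs l.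
Proof.
  intros Hx. induction l; simpl. rewrite Rabs_R0; lra.
  eapply Rle_trans. apply Rabs_triang. rewrite Rabs_mult, (Rabs_pos_eq x) by lra.
  assert (x * Rabs (pe l x) <= sumabs l).
  { assert (x * Rabs (pe l x) <= 1 * Rabs (pe l x)) by (apply Rmult_le_compat_r; [apply Rabs_pos|lra]). lra. }
  lra.
Qed.

Lemma pw1 t h : 0 <= t -> 1 <= h -> t ^ 5 * h <= (t ^ 4 * h ^ 2 + t ^ 6 * h ^ 2) / 2.
Proof.
  intros Ht Hh. assert (0 <= t ^ 4) by (apply pow_le; lra).
  assert (h <= h ^ 2) by nra.
  assert (2 * t <= 1 + t ^ 2) by (pose proof (pow2_ge_0 (t - 1)); simpl in *; nra).
  assert (t ^ 5 * h <= t ^ 5 * h ^ 2) by (apply Rmult_le_compat_l; [apply pow_le|]; lra).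
  assert (2 * (t ^ 5 * h ^ 2) <= t ^ 4 * h ^ 2 * (1 + t ^ 2)).
  { replace (2 * (t ^ 5 * h ^ 2)) with (t ^ 4 * h ^ 2 * (2 * t)) by ring.
    apply Rmult_le_compat_l; auto. nra. }
  nra.
Qed.

Lemma pw2 t h : 0 <= t -> 1 <= h -> t ^ 6 * h <= t ^ 6 * h ^ 2.
Proof. intros. apply Rmult_le_compat_l. apply pow_le; lra. nra. Qed.

Lemma pw3 t h : 0 <= t -> 1 <= h -> t ^ 7 * h <= (t ^ 6 * h ^ 2 + t ^ 8 * h ^ 2) / 2.
Proof.
  intros Ht Hh. assert (0 <= t ^ 6) by (apply pow_le; lra).
  assert (h <= h ^ 2) by nra.
  assert (t ^ 7 * h <= t ^ 7 * h ^ 2) by (apply Rmult_le_compat_l; [apply pow_le|]; lra).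
  assert (2 * (t ^ 7 * h ^ 2) <= t ^ 6 * h ^ 2 * (1 + t ^ 2)).
  { replace (2 * (t ^ 7 * h ^ 2)) with (t ^ 6 * h ^ 2 * (2 * t)) by ring.
    apply Rmult_le_compat_l. apply Rmult_le_pos; auto; apply pow_le; lra.
    pose proof (pow2_ge_0 (t - 1)); simpl in *; nra. }
  nra.
Qed.

Lemma Phi_eq lam M j x : Phi lam M j x = Rabs (Uf lam x) ^ (2 * j) * ((1 + Rabs (Uf lam x)) ^ M) ^ 2.
Proof.
  unfold Phi. rewrite (pow_mult (Rabs _)), pow2_abs, <- pow_mult. f_equal.
  rewrite <- pow_mult. f_equal. lia.
Qed.

Lemma amgm s w x : 0 < x -> Rabs (s * w) <= (s ^ 2 / x + x * w ^ 2) / 2.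
Proof.
  intros Hx. rewrite Rabs_mult.
  assert (0 <= (Rabs s - x * Rabs w) ^ 2 / x) by (unfold Rdiv; apply Rmult_le_pos; [apply pow2_ge_0 | left; apply Rinv_0_lt_compat; auto]).
  rewrite <- (pow2_abs s), <- (pow2_abs w).
  replace ((Rabs s - x * Rabs w) ^ 2 / x) with (Rabs s ^ 2 / x - 2 * (Rabs s * Rabs w) + x * Rabs w ^ 2) in H
    by (field; lra).
  lra.
Qed.


Ltac umsimp lam :=
  repeat match goal with |- context [pois_E lam (fun y => Uf lam y ^ ?j)] =>
    change (pois_E lam (fun y => Uf lam y ^ j)) with (Um lam j) end;
  repeat match goal with
  | |- context [Um lam 0] => rewrite (Um0 lam) by lra
  | |- context [Um lam 1] => rewrite (Um1 lam) by lra
  | |- context [Um lam 2] => rewrite (Um2 lam) by lra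
  | |- context [Um lam 3] => rewrite (Um3 lam) by lra
  | |- context [Um lam 4] => rewrite (Um4 lam) by lra
  | |- context [Um lam 5] => rewrite (Um5 lam) by lra
  | |- context [Um lam 6] => rewrite (Um6 lam) by lra
  | |- context [Um lam 7] => rewrite (Um7 lam) by lra
  | |- context [Um lam 8] => rewrite (Um8 lam) by lra
  end; cbv zeta.

Lemma test_mp lam a b : 1 <= lam ->
  pois_E lam (fun y => pe [0;0;1;a;b] (Uf lam y)) = / lam + a * (/ lam) ^ 2 + b * (3 * (/ lam) ^ 2 + (/ lam) ^ 3).
Proof.
  intros Hl. rewrite E_pe0 by (try lra; apply good_U). cbn [msum]. umsimp lam. ring.
Qed.

Definition Sfun (F : R -> R) a b lam y := F (Uf lam y) - pe [0;0;1;a;b] (Uf lam y).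
Definition sig F a b lam j := pois_E lam (fun y => Sfun F a b lam y * Uf lam y ^ j).
Definition sS F a b lam := pois_E lam (fun y => Sfun F a b lam y ^ 2).

Definition HFprop (F : R -> R) a b K M := forall u, -1 <= u ->
  Rabs (F u - (u ^ 2 + a * u ^ 3 + b * u ^ 4)) <= K * Rabs u ^ 5 * (1 + Rabs u) ^ M.

Lemma U_ge lam k : 0 < lam -> -1 <= Uf lam (INR k).
Proof.
  intros Hl. unfold Uf. assert (0 <= INR k) by apply pos_INR.
  apply (Rmult_le_reg_r lam); auto. unfold Rdiv. rewrite Rmult_assoc, Rinv_l by lra. lra.
Qed.

Lemma S_pt F a b K M lam : 0 < lam -> HFprop F a b K M -> forall k : nat,
  Rabs (Sfun F a b lam (INR k)) <= K * Rabs (Uf lam (INR k)) ^ 5 * (1 + Rabs (Uf lam (INR k))) ^ M.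
Proof.
  intros Hl HF k. unfold Sfun. 
  replace (pe [0;0;1;a;b] (Uf lam (INR k))) with
    (Uf lam (INR k) ^ 2 + a * Uf lam (INR k) ^ 3 + b * Uf lam (INR k) ^ 4) by (simpl; ring).
  apply HF. apply U_ge; auto.
Qed.

Lemma good_S F a b K M lam : 0 < lam -> 0 <= K -> HFprop F a b K M -> good (Sfun F a b lam).
Proof.
  intros Hl HK HF.
  apply (good_le _ (fun y => K * Rabs (Uf lam y) ^ 5 * (1 + Rabs (Uf lam y)) ^ M)).
  - intros k. eapply Rle_trans. apply (S_pt F a b K M lam Hl HF k). apply Rle_abs.
  - apply good_mul. apply good_scal. apply good_pow, good_abs, good_U.
    apply good_pow, good_add. apply good_const. apply good_abs, good_U.
Qed.

Lemma good_f1 F a b K M lam : 0 < lam -> 0 <= K -> HFprop F a b K M -> good (fun y => F (Uf lam y)).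
Proof.
  intros Hl HK HF.
  apply (good_le _ (fun y => pe [0;0;1;a;b] (Uf lam y) + Sfun F a b lam y)).
  - intros k. unfold Sfun. right. f_equal. ring.
  - apply good_add. apply good_pe, good_U. eapply good_S; eauto.
Qed.

Lemma sig_bounds F a b K M c lam : 1 <= lam -> 0 <= K -> 0 <= c -> HFprop F a b K M ->
  (forall j, (j <= 5)%nat -> pois_E lam (Phi lam M j) <= c * (/ lam) ^ j) ->
  Rabs (sig F a b lam 0) <= K * c * (/ lam) ^ 2 /\
  Rabs (sig F a b lam 1) <= K * c * (/ lam) ^ 3 /\
  Rabs (sig F a b lam 2) <= K * c * (/ lam) ^ 3 /\
  0 <= sS F a b lam <= K ^ 2 * c * (/ lam) ^ 5.
Proof.
  intros Hl HK Hc HF HPhi.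
  assert (Hl0 : 0 < lam) by lra.
  assert (Hx : 0 < / lam) by (apply Rinv_0_lt_compat; lra).
  assert (Hx1 : / lam <= 1) by (rewrite <- Rinv_1; apply Rinv_le_contravar; lra).
  assert (GS := good_S F a b K M lam Hl0 HK HF).
  assert (GU : forall j, good (fun y => Uf lam y ^ j)) by (intros; apply good_pow, good_U).
  assert (GSU : forall j, good (fun y => Sfun F a b lam y * Uf lam y ^ j)) by (intros; apply good_mul; auto).
  assert (GP : forall j, good (Phi lam M j)) by (intros; apply good_Phi).
  assert (Hpt : forall k : nat, let t := Rabs (Uf lam (INR k)) in let h := (1 + t) ^ M in
     Rabs (Sfun F a b lam (INR k)) <= K * (t ^ 5 * h) /\ 0 <= t /\ 1 <= h).
  { intros k t h. split. rewrite <- Rmult_assoc. apply S_pt; auto.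
    split. apply Rabs_pos. apply pow_R1_Rle. unfold t; generalize (Rabs_pos (Uf lam (INR k))); lra. }
  assert (HP2 := HPhi 2%nat ltac:(lia)). assert (HP3 := HPhi 3%nat ltac:(lia)).
  assert (HP4 := HPhi 4%nat ltac:(lia)). assert (HP5 := HPhi 5%nat ltac:(lia)).
  assert (x23 : (/ lam) ^ 3 <= (/ lam) ^ 2) by (simpl; assert (0 <= / lam * / lam) by nra; nra).
  assert (x34 : (/ lam) ^ 4 <= (/ lam) ^ 3) by (simpl; assert (0 <= / lam * (/ lam * / lam)) by nra; nra).
  split; [|split; [|split]].
  - unfold sig. eapply Rle_trans. apply E_abs; auto; lra.
    eapply Rle_trans. apply (E_le lam _ (fun y => K / 2 * (Phi lam M 2 y + Phi lam M 3 y))); try lra.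
    apply good_abs; auto. apply good_scal, good_add; auto.
    { intros k. destruct (Hpt k) as [H1 [H2 H3]]. rewrite !Phi_eq. simpl pow at 1.
      rewrite Rmult_1_r. set (t := Rabs (Uf lam (INR k))) in *. set (h := (1 + t) ^ M) in *.
      pose proof (pw1 t h H2 H3). replace (2 * 2)%nat with 4%nat by lia. replace (2 * 3)%nat with 6%nat by lia.
      assert (K * (t ^ 5 * h) <= K * ((t ^ 4 * h ^ 2 + t ^ 6 * h ^ 2) / 2)) by (apply Rmult_le_compat_l; auto).
      lra. }
    rewrite E_scal, E_add by (auto; lra).
    assert (K / 2 * (pois_E lam (Phi lam M 2) + pois_E lam (Phi lam M 3)) <= K / 2 * (c * (/ lam) ^ 2 + c * (/ lam) ^ 2)).
    { apply Rmult_le_compat_l. lra. assert (c * (/ lam) ^ 3 <= c * (/ lam) ^ 2) by (apply Rmult_le_compat_l; auto). lra. }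
    lra.
  - unfold sig. eapply Rle_trans. apply E_abs; auto; lra.
    eapply Rle_trans. apply (E_le lam _ (fun y => K * Phi lam M 3 y)); try lra.
    apply good_abs; auto. apply good_scal; auto.
    { intros k. destruct (Hpt k) as [H1 [H2 H3]]. rewrite !Phi_eq. 
      rewrite Rabs_mult, <- RPow_abs.
      set (t := Rabs (Uf lam (INR k))) in *. set (h := (1 + t) ^ M) in *.
      pose proof (pw2 t h H2 H3). replace (2 * 3)%nat with 6%nat by lia.
      assert (Rabs (Sfun F a b lam (INR k)) * t ^ 1 <= K * (t ^ 5 * h) * t ^ 1) by (apply Rmult_le_compat_r; auto; apply pow_le; lra).
      assert (K * (t ^ 5 * h) * t ^ 1 = K * (t ^ 6 * h)) by ring.
      assert (K * (t ^ 6 * h) <= K * (t ^ 6 * h ^ 2)) by (apply Rmult_le_compat_l; auto).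
      lra. }
    rewrite E_scal. assert (K * pois_E lam (Phi lam M 3) <= K * (c * (/ lam) ^ 3)) by (apply Rmult_le_compat_l; auto).
    lra.
  - unfold sig. eapply Rle_trans. apply E_abs; auto; lra.
    eapply Rle_trans. apply (E_le lam _ (fun y => K / 2 * (Phi lam M 3 y + Phi lam M 4 y))); try lra.
    apply good_abs; auto. apply good_scal, good_add; auto.
    { intros k. destruct (Hpt k) as [H1 [H2 H3]]. rewrite !Phi_eq.
      rewrite Rabs_mult, <- RPow_abs.
      set (t := Rabs (Uf lam (INR k))) in *. set (h := (1 + t) ^ M) in *.
      pose proof (pw3 t h H2 H3). replace (2 * 3)%nat with 6%nat by lia. replace (2 * 4)%nat with 8%nat by lia.
      assert (Rabs (Sfun F a b lam (INR k)) * t ^ 2 <= K * (t ^ 5 * h) * t ^ 2) by (apply Rmult_le_compat_r; auto; apply pow_le; lra).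
      assert (K * (t ^ 5 * h) * t ^ 2 = K * (t ^ 7 * h)) by ring.
      assert (K * (t ^ 7 * h) <= K * ((t ^ 6 * h ^ 2 + t ^ 8 * h ^ 2) / 2)) by (apply Rmult_le_compat_l; auto).
      lra. }
    rewrite E_scal, E_add by (auto; lra).
    assert (K / 2 * (pois_E lam (Phi lam M 3) + pois_E lam (Phi lam M 4)) <= K / 2 * (c * (/ lam) ^ 3 + c * (/ lam) ^ 3)).
    { apply Rmult_le_compat_l. lra. assert (c * (/ lam) ^ 4 <= c * (/ lam) ^ 3) by (apply Rmult_le_compat_l; auto). lra. }
    lra.
  - unfold sS. split.
    + apply E_nonneg; try lra. apply good_pow; auto. intros; apply pow2_ge_0.
    + eapply Rle_trans. apply (E_le lam _ (fun y => K ^ 2 * Phi lam M 5 y)); try lra.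
      apply good_pow; auto. apply good_scal; auto.
      { intros k. destruct (Hpt k) as [H1 [H2 H3]]. rewrite !Phi_eq.
        set (t := Rabs (Uf lam (INR k))) in *. set (h := (1 + t) ^ M) in *.
        replace (2 * 5)%nat with 10%nat by lia.
        rewrite <- pow2_abs. assert (0 <= Rabs (Sfun F a b lam (INR k))) by apply Rabs_pos.
        assert (Rabs (Sfun F a b lam (INR k)) ^ 2 <= (K * (t ^ 5 * h)) ^ 2) by (apply pow_incr; lra).
        assert ((K * (t ^ 5 * h)) ^ 2 = K ^ 2 * (t ^ 10 * h ^ 2)) by ring. lra. }
      rewrite E_scal. assert (K ^ 2 * pois_E lam (Phi lam M 5) <= K ^ 2 * (c * (/ lam) ^ 5)) by (apply Rmult_le_compat_l; auto; apply pow2_ge_0).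
      lra.
Qed.


Definition mpv x a b := x + a * x ^ 2 + b * (3 * x ^ 2 + x ^ 3).
Definition e1pv x a b := x ^ 2 + a * (3 * x ^ 2 + x ^ 3) + b * (10 * x ^ 3 + x ^ 4).
Definition e3pv x a b := (3 * x ^ 2 + x ^ 3) + a * (10 * x ^ 3 + x ^ 4) + b * (15 * x ^ 3 + 25 * x ^ 4 + x ^ 5).
Definition s2pv x a b := (3 * x ^ 2 + x ^ 3) + 2 * a * (10 * x ^ 3 + x ^ 4)
  + (a ^ 2 + 2 * b) * (15 * x ^ 3 + 25 * x ^ 4 + x ^ 5) + 2 * a * b * (105 * x ^ 4 + 56 * x ^ 5 + x ^ 6)
  + b ^ 2 * (105 * x ^ 4 + 490 * x ^ 5 + 119 * x ^ 6 + x ^ 7).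
Definition wl x a b := [3 * b * x ^ 2 + 2 * a * x ^ 2 + 6 * b * x ^ 3;
  -3 * a * x - 4 * b * x ^ 2 + 2 * a * x ^ 2 + 6 * b * x ^ 3; -6 * b * x - 3 * a * x - 7 * b * x ^ 2; a; b].
Definition ql x a b := [- mpv x a b; - (x + 3 * a * x + (a + 10 * b) * x ^ 2 + b * x ^ 3); 1; a; b].
Definition lQ a b := [24 * b + 12 * a + 6 * a ^ 2; 28 * b + 96 * b ^ 2 + 144 * a * b + 18 * a ^ 2;
  384 * b ^ 2 + 84 * a * b; 98 * b ^ 2].
Definition lT a b := [48 * b ^ 2 + 144 * a * b; 432 * b ^ 2].
Definition lW a b := [6 * a ^ 2; 24 * b ^ 2 + 72 * a * b; 216 * b ^ 2].
Definition lE a b := [12 * b + 6 * a; 14 * b].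

Definition sqlist (l : list R) : list R :=
  match l with
  | [w0; w1; w2; w3; w4] =>
    [w0 * w0; 2 * w0 * w1; w1 * w1 + 2 * w0 * w2; 2 * w0 * w3 + 2 * w1 * w2;
     w2 * w2 + 2 * w0 * w4 + 2 * w1 * w3; 2 * w1 * w4 + 2 * w2 * w3; w3 * w3 + 2 * w2 * w4;
     2 * w3 * w4; w4 * w4]
  | _ => []
  end.

Lemma sqlist_ok w0 w1 w2 w3 w4 u : pe [w0; w1; w2; w3; w4] u ^ 2 = pe (sqlist [w0; w1; w2; w3; w4]) u.
Proof. simpl. ring. Qed.

Section Dec.
Variables (F : R -> R) (a b K : R) (M : nat) (lam : R).
Hypotheses (Hl : 1 <= lam) (HK : 0 <= K) (HF : HFprop F a b K M).

Let Hl0 : 0 < lam. Proof. lra. Qed.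
Let GS := good_S F a b K M lam Hl0 HK HF.
Let GU : forall j, good (fun y => Uf lam y ^ j). Proof. intros; apply good_pow, good_U. Qed.
Let GSU : forall j, good (fun y => Sfun F a b lam y * Uf lam y ^ j). Proof. intros; apply good_mul; auto. Qed.
Let GPE : forall l, good (fun y => pe l (Uf lam y)). Proof. intros; apply good_pe, good_U. Qed.

Lemma dec_m : pois_E lam (fun y => F (Uf lam y)) = mpv (/ lam) a b + sig F a b lam 0.
Proof.
  rewrite (E_ext lam _ (lc [(1, fun y => pe [0;0;1;a;b] (Uf lam y)); (1, fun y => Sfun F a b lam y * Uf lam y ^ 0)])).
  2:{ intros k. simpl. unfold Sfun. simpl. ring. }
  rewrite E_lc by (try lra; cbn [allgood fst snd]; repeat split; first [apply GPE | apply GSU | apply good_pow, GS | apply GS | apply GU]). cbn [lcE].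
  rewrite E_pe0 by (try lra; apply good_U). cbn [msum]. umsimp lam. unfold mpv, sig. ring.
Qed.

Lemma dec_e1 : pois_E lam (fun y => F (Uf lam y) * Uf lam y ^ 1) = e1pv (/ lam) a b + sig F a b lam 1.
Proof.
  rewrite (E_ext lam _ (lc [(1, fun y => pe [0;0;0;1;a;b] (Uf lam y)); (1, fun y => Sfun F a b lam y * Uf lam y ^ 1)])).
  2:{ intros k. simpl. unfold Sfun. simpl. ring. }
  rewrite E_lc by (try lra; cbn [allgood fst snd]; repeat split; first [apply GPE | apply GSU | apply good_pow, GS | apply GS | apply GU]). cbn [lcE].
  rewrite E_pe0 by (try lra; apply good_U). cbn [msum]. umsimp lam. unfold e1pv, sig. ring.
Qed.

Lemma dec_e3 : pois_E lam (fun y => F (Uf lam y) * Uf lam y ^ 2) = e3pv (/ lam) a b + sig F a b lam 2.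
Proof.
  rewrite (E_ext lam _ (lc [(1, fun y => pe [0;0;0;0;1;a;b] (Uf lam y)); (1, fun y => Sfun F a b lam y * Uf lam y ^ 2)])).
  2:{ intros k. simpl. unfold Sfun. simpl. ring. }
  rewrite E_lc by (try lra; cbn [allgood fst snd]; repeat split; first [apply GPE | apply GSU | apply good_pow, GS | apply GS | apply GU]). cbn [lcE].
  rewrite E_pe0 by (try lra; apply good_U). cbn [msum]. umsimp lam. unfold e3pv, sig. ring.
Qed.

Lemma dec_s2 : pois_E lam (fun y => F (Uf lam y) ^ 2) = s2pv (/ lam) a b
   + 2 * (sig F a b lam 2 + a * sig F a b lam 3 + b * sig F a b lam 4) + sS F a b lam.
Proof.
  rewrite (E_ext lam _ (lc [(1, fun y => pe [0;0;0;0;1;2*a;a^2+2*b;2*a*b;b^2] (Uf lam y));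
     (2, fun y => Sfun F a b lam y * Uf lam y ^ 2); (2*a, fun y => Sfun F a b lam y * Uf lam y ^ 3);
     (2*b, fun y => Sfun F a b lam y * Uf lam y ^ 4); (1, fun y => Sfun F a b lam y ^ 2)])).
  2:{ intros k. simpl. unfold Sfun. simpl. ring. }
  rewrite E_lc by (try lra; cbn [allgood fst snd]; repeat split; first [apply GPE | apply GSU | apply good_pow, GS | apply GS | apply GU]). cbn [lcE].
  rewrite E_pe0 by (try lra; apply good_U). cbn [msum]. umsimp lam. unfold s2pv, sig, sS. ring.
Qed.

Lemma dec_W l : pois_E lam (fun y => Sfun F a b lam y * pe l (Uf lam y)) = msum (sig F a b lam) 0 l.
Proof.
  rewrite (E_ext lam _ (fun y => Sfun F a b lam y * (pe l (Uf lam y) * Uf lam y ^ 0))) by (intros; simpl; ring).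
  generalize 0%nat. induction l as [|c l IH]; intros i.
  - simpl. rewrite (E_ext lam _ (fun _ => 0 * 0)) by (intros; ring). rewrite E_const. ring.
  - rewrite (E_ext lam _ (fun y => c * (Sfun F a b lam y * Uf lam y ^ i) +
        Sfun F a b lam y * (pe l (Uf lam y) * Uf lam y ^ S i))) by (intros; simpl; ring).
    rewrite E_add; try lra. rewrite E_scal, IH. simpl. unfold sig. ring.
    apply good_scal; apply GSU. apply good_mul. apply GS. apply good_mul. apply GPE. apply GU.
Qed.

Lemma EW2 : pois_E lam (fun y => pe (wl (/ lam) a b) (Uf lam y) ^ 2) = (/ lam) ^ 3 * pe (lW a b) (/ lam).
Proof.
  unfold wl. rewrite (E_ext lam _ (fun y => pe (sqlist [3 * b * (/ lam) ^ 2 + 2 * a * (/ lam) ^ 2 + 6 * b * (/ lam) ^ 3;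
  -3 * a * (/ lam) - 4 * b * (/ lam) ^ 2 + 2 * a * (/ lam) ^ 2 + 6 * b * (/ lam) ^ 3;
   -6 * b * (/ lam) - 3 * a * (/ lam) - 7 * b * (/ lam) ^ 2; a; b]) (Uf lam y))) by (intros; apply sqlist_ok).
  rewrite E_pe0 by (try lra; apply good_U). cbn [msum sqlist]. umsimp lam. unfold lW. simpl pe. ring.
Qed.

Lemma EWq2 : pois_E lam (fun y => pe (ql (/ lam) a b) (Uf lam y) ^ 2) = 2 * (/ lam) ^ 2 + (/ lam) ^ 3 * pe (lQ a b) (/ lam).
Proof.
  unfold ql. rewrite (E_ext lam _ (fun y => pe (sqlist [- mpv (/ lam) a b;
     - (/ lam + 3 * a * / lam + (a + 10 * b) * (/ lam) ^ 2 + b * (/ lam) ^ 3); 1; a; b]) (Uf lam y)))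
     by (intros; apply sqlist_ok).
  rewrite E_pe0 by (try lra; apply good_U). cbn [msum sqlist]. umsimp lam. unfold lQ, mpv. simpl pe. ring.
Qed.

End Dec.


Lemma xpow_le x m n : 0 <= x <= 1 -> (m <= n)%nat -> x ^ n <= x ^ m.
Proof.
  intros Hx Hmn. replace n with (m + (n - m))%nat by lia. rewrite pow_add.
  rewrite <- (Rmult_1_r (x ^ m)) at 2. apply Rmult_le_compat_l. apply pow_le; lra.
  apply pow_le1; lra.
Qed.

Lemma amgm_E F a b K M lam l : 1 <= lam -> 0 <= K -> HFprop F a b K M ->
  Rabs (msum (sig F a b lam) 0 l) <=
    (sS F a b lam / (/ lam) + / lam * pois_E lam (fun y => pe l (Uf lam y) ^ 2)) / 2.
Proof.
  intros Hl HK HF. assert (Hl0 : 0 < lam) by lra.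
  assert (Hx : 0 < / lam) by (apply Rinv_0_lt_compat; lra).
  assert (GS := good_S F a b K M lam Hl0 HK HF).
  assert (GP : good (fun y => pe l (Uf lam y))) by (apply good_pe, good_U).
  rewrite <- (dec_W F a b K M lam Hl HK HF).
  eapply Rle_trans. apply E_abs. lra. apply good_mul; auto.
  eapply Rle_trans. apply (E_le lam _ (fun y => (Sfun F a b lam y ^ 2 / (/ lam) + / lam * pe l (Uf lam y) ^ 2) / 2)).
  lra. apply good_abs, good_mul; auto.
  apply (good_le _ (fun y => / (2 * / lam) * Sfun F a b lam y ^ 2 + / lam / 2 * pe l (Uf lam y) ^ 2)).
  intros; right; f_equal; field; lra.
  apply good_add; apply good_scal, good_pow; auto.
  intros k. apply amgm; auto.
  rewrite (E_ext lam _ (fun y => / (2 * / lam) * Sfun F a b lam y ^ 2 + / lam / 2 * pe l (Uf lam y) ^ 2))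
    by (intros; field; lra).
  rewrite E_add, !E_scal; try lra. unfold sS. right. field. lra.
  apply good_scal, good_pow; auto. apply good_scal, good_pow; auto.
Qed.

Lemma est_ident F a b K M lam : 1 <= lam -> 0 <= K -> HFprop F a b K M ->
  let x := / lam in
  let f1 := fun x => F (Uf lam x) in
  let mF := pois_E lam f1 in
  let e1 := pois_E lam (fun x => f1 x * Uf lam x ^ 1) in
  let e3 := pois_E lam (fun x => f1 x * Uf lam x ^ 2) in
  let s2 := pois_E lam (fun x => f1 x ^ 2) in
  let Q := s2 - mF ^ 2 - lam * e1 ^ 2 in
  let e2 := e3 - / lam * e1 - / lam * mF in
  let s0 := sig F a b lam 0 in let s1 := sig F a b lam 1 in let s2' := sig F a b lam 2 in
  let sSS := sS F a b lam in
  let dl := s2' - x * s1 - x * s0 in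
  Q - 2 * x ^ 2 = x ^ 3 * pe (lQ a b) x + 2 * msum (sig F a b lam) 0 (ql x a b) + sSS - s0 ^ 2 - lam * s1 ^ 2 /\
  (2 * Q - (e2 / x) ^ 2) - 12 * a ^ 2 * x ^ 3 = x ^ 4 * pe (lT a b) x + 4 * msum (sig F a b lam) 0 (wl x a b)
     + 2 * (sSS - s0 ^ 2 - lam * s1 ^ 2) - (lam * dl) ^ 2 /\
  e2 = 2 * x ^ 2 + x ^ 3 * pe (lE a b) x + dl.
Proof.
  intros Hl HK HF x f1 mF e1 e3 s2 Q e2 s0 s1 s2' sSS dl.
  assert (Hl0 : lam <> 0) by lra.
  unfold Q, e2, mF, e1, e3, s2, f1.
  rewrite (dec_m F a b K M lam Hl HK HF), (dec_e1 F a b K M lam Hl HK HF), (dec_e3 F a b K M lam Hl HK HF),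
    (dec_s2 F a b K M lam Hl HK HF).
  unfold dl, x, s0, s1, s2', sSS. cbn [msum ql wl lQ lT lE pe]. unfold mpv, e1pv, e3pv, s2pv.
  split; [|split]. { field; auto. } { field; auto. } { field; auto. }
Qed.

Definition Cq a b K c := sumabs (lQ a b) + (K ^ 2 * c + 2 + sumabs (lQ a b)) + K ^ 2 * c + 2 * (K ^ 2 * c ^ 2).
Definition Ct a b K c := sumabs (lT a b) + 2 * (K ^ 2 * c + sumabs (lW a b)) + 2 * (K ^ 2 * c + 2 * (K ^ 2 * c ^ 2))
  + 9 * (K ^ 2 * c ^ 2).
Definition Ce a b K c := sumabs (lE a b) + 3 * (K * c).

Lemma est F a b K M c lam : 1 <= lam -> 0 <= K -> HFprop F a b K M -> 0 <= c ->
  (forall j, (j <= 5)%nat -> pois_E lam (Phi lam M j) <= c * (/ lam) ^ j) ->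
  let x := / lam in
  let f1 := fun x => F (Uf lam x) in
  let mF := pois_E lam f1 in
  let e1 := pois_E lam (fun x => f1 x * Uf lam x ^ 1) in
  let e3 := pois_E lam (fun x => f1 x * Uf lam x ^ 2) in
  let s2 := pois_E lam (fun x => f1 x ^ 2) in
  let Q := s2 - mF ^ 2 - lam * e1 ^ 2 in
  let e2 := e3 - / lam * e1 - / lam * mF in
  Rabs (Q - 2 * x ^ 2) <= Cq a b K c * x ^ 3 /\
  Rabs ((2 * Q - (e2 / x) ^ 2) - 12 * a ^ 2 * x ^ 3) <= Ct a b K c * x ^ 4 /\
  2 * x ^ 2 - Ce a b K c * x ^ 3 <= e2.
Proof.
  intros Hl HK HF Hc HPhi x f1 mF e1 e3 s2 Q e2.
  destruct (est_ident F a b K M lam Hl HK HF) as [IQ [IT IE]]. 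
  destruct (sig_bounds F a b K M c lam Hl HK Hc HF HPhi) as [B0 [B1 [B2 [BS0 BS]]]]. fold x in B0, B1, B2, BS.
  pose proof (amgm_E F a b K M lam (wl x a b) Hl HK HF) as AW. rewrite EW2 in AW by auto. fold x in AW.
  pose proof (amgm_E F a b K M lam (ql x a b) Hl HK HF) as AQq. rewrite EWq2 in AQq by auto. fold x in AQq.
  set (s0 := sig F a b lam 0) in *. set (s1 := sig F a b lam 1) in *. set (s2' := sig F a b lam 2) in *.
  set (sSS := sS F a b lam) in *.
  set (ESW := msum (sig F a b lam) 0 (wl x a b)) in *. set (ESWq := msum (sig F a b lam) 0 (ql x a b)) in *.
  assert (Hx : 0 < x) by (apply Rinv_0_lt_compat; lra).
  assert (Hx1 : x <= 1) by (unfold x; rewrite <- Rinv_1; apply Rinv_le_contravar; lra).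
  assert (Hxl : lam = / x) by (unfold x; rewrite Rinv_inv; auto).
  assert (Hx01 : 0 <= x <= 1) by lra.
  assert (X2 : 0 < x ^ 2) by (apply pow_lt; lra). assert (X3 : 0 < x ^ 3) by (apply pow_lt; lra).
  assert (X4 : 0 < x ^ 4) by (apply pow_lt; lra). assert (X5 : 0 < x ^ 5) by (apply pow_lt; lra).
  assert (X43 : x ^ 4 <= x ^ 3) by (apply xpow_le; auto).
  assert (X53 : x ^ 5 <= x ^ 3) by (apply xpow_le; auto).
  assert (X54 : x ^ 5 <= x ^ 4) by (apply xpow_le; auto).
  assert (PQ := pe_bound (lQ a b) x Hx01). assert (PT := pe_bound (lT a b) x Hx01).
  assert (PW := pe_bound (lW a b) x Hx01). assert (PE := pe_bound (lE a b) x Hx01).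
  assert (AQn := sumabs_nonneg (lQ a b)). assert (ATn := sumabs_nonneg (lT a b)).
  assert (AWn := sumabs_nonneg (lW a b)). assert (AEn := sumabs_nonneg (lE a b)).
  assert (Kc : 0 <= K * c) by nra. assert (K2c : 0 <= K ^ 2 * c) by (apply Rmult_le_pos; nra).
  assert (K2c2 : 0 <= K ^ 2 * c ^ 2) by (apply Rmult_le_pos; nra).
  assert (SSx : sSS / x <= K ^ 2 * c * x ^ 4).
  { apply Rle_div_l; auto. replace (K ^ 2 * c * x ^ 4 * x) with (K ^ 2 * c * x ^ 5) by ring. lra. }
  assert (SSx0 : 0 <= sSS / x) by (apply Rdiv_le_0_compat; lra).
  assert (S0sq : s0 ^ 2 <= K ^ 2 * c ^ 2 * x ^ 4).
  { rewrite <- (pow2_abs s0). replace (K ^ 2 * c ^ 2 * x ^ 4) with ((K * c * x ^ 2) ^ 2) by ring.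
    apply pow_incr. split; [apply Rabs_pos|auto]. }
  assert (S1sq : lam * s1 ^ 2 <= K ^ 2 * c ^ 2 * x ^ 5).
  { rewrite Hxl. rewrite <- (pow2_abs s1).
    assert (Rabs s1 ^ 2 <= (K * c * x ^ 3) ^ 2) by (apply pow_incr; split; [apply Rabs_pos|auto]).
    assert (/ x * Rabs s1 ^ 2 <= / x * (K * c * x ^ 3) ^ 2).
    { apply Rmult_le_compat_l. left; apply Rinv_0_lt_compat; auto. apply pow_incr; split; [apply Rabs_pos|auto]. }
    replace (/ x * (K * c * x ^ 3) ^ 2) with (K ^ 2 * c ^ 2 * x ^ 5) in H0 by (field; lra). lra. }
  assert (S1sq0 : 0 <= lam * s1 ^ 2) by (apply Rmult_le_pos; [lra|apply pow2_ge_0]).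
  set (dl := s2' - x * s1 - x * s0) in *.
  assert (Hdl : Rabs dl <= 3 * (K * c) * x ^ 3).
  { unfold dl. eapply Rle_trans. apply Rabs_sub_le2. eapply Rle_trans. apply Rplus_le_compat_r. apply Rabs_sub_le2.
    rewrite !Rabs_mult, (Rabs_pos_eq x) by lra.
    assert (x * Rabs s1 <= x * (K * c * x ^ 3)) by (apply Rmult_le_compat_l; lra).
    assert (x * Rabs s0 <= x * (K * c * x ^ 2)) by (apply Rmult_le_compat_l; lra).
    assert (x * (K * c * x ^ 3) <= K * c * x ^ 3).
    { replace (x * (K * c * x ^ 3)) with (K * c * x ^ 4) by ring. apply Rmult_le_compat_l; auto. }
    replace (x * (K * c * x ^ 2)) with (K * c * x ^ 3) in H0 by ring. lra. }
  split; [|split].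
  -
    replace (Q - 2 * x ^ 2) with (x ^ 3 * pe (lQ a b) x + 2 * ESWq + sSS - s0 ^ 2 - lam * s1 ^ 2)
      by (symmetry; exact IQ).
    assert (H1 : Rabs (x ^ 3 * pe (lQ a b) x) <= sumabs (lQ a b) * x ^ 3).
    { rewrite Rabs_mult, Rabs_pos_eq by lra. rewrite Rmult_comm. apply Rmult_le_compat_r; lra. }
    assert (H2 : Rabs (x * (2 * x ^ 2 + x ^ 3 * pe (lQ a b) x)) <= 2 * x ^ 3 + sumabs (lQ a b) * x ^ 3).
    { rewrite Rabs_mult, (Rabs_pos_eq x) by lra.
      replace (2 * x ^ 3 + sumabs (lQ a b) * x ^ 3) with (x * (2 * x ^ 2 + sumabs (lQ a b) * x ^ 2)) by ring.
      apply Rmult_le_compat_l; [lra|]. eapply Rle_trans. apply Rabs_triang.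
      rewrite (Rabs_pos_eq (2 * x ^ 2)) by lra. rewrite Rabs_mult, (Rabs_pos_eq (x ^ 3)) by lra.
      replace (x ^ 3) with (x * x ^ 2) by ring.
      assert (x * x ^ 2 * Rabs (pe (lQ a b) x) <= 1 * x ^ 2 * sumabs (lQ a b)).
      { apply Rmult_le_compat. nra. apply Rabs_pos. apply Rmult_le_compat_r; lra. auto. }
      lra. }
    assert (H3 : Rabs ESWq <= (K ^ 2 * c * x ^ 3 + 2 * x ^ 3 + sumabs (lQ a b) * x ^ 3) / 2).
    { eapply Rle_trans. apply AQq.
      assert (x * (2 * x ^ 2 + x ^ 3 * pe (lQ a b) x) <= 2 * x ^ 3 + sumabs (lQ a b) * x ^ 3)
        by (eapply Rle_trans; [apply Rle_abs|exact H2]).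
      assert (K ^ 2 * c * x ^ 4 <= K ^ 2 * c * x ^ 3) by (apply Rmult_le_compat_l; auto). lra. }
    assert (sSS <= K ^ 2 * c * x ^ 3) by (eapply Rle_trans; [exact BS|]; apply Rmult_le_compat_l; auto).
    assert (K ^ 2 * c ^ 2 * x ^ 4 <= K ^ 2 * c ^ 2 * x ^ 3) by (apply Rmult_le_compat_l; auto).
    assert (K ^ 2 * c ^ 2 * x ^ 5 <= K ^ 2 * c ^ 2 * x ^ 3) by (apply Rmult_le_compat_l; auto).
    assert (0 <= s0 ^ 2) by apply pow2_ge_0.
    unfold Cq.
    set (E1 := x ^ 3 * pe (lQ a b) x) in *.
    apply Rabs_le. apply abs_btw in H1. apply abs_btw in H3. split; nra.
  -
    replace ((2 * Q - (e2 / x) ^ 2) - 12 * a ^ 2 * x ^ 3) with (x ^ 4 * pe (lT a b) x + 4 * ESW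
     + 2 * (sSS - s0 ^ 2 - lam * s1 ^ 2) - (lam * dl) ^ 2) by (symmetry; exact IT).
    assert (H1 : Rabs (x ^ 4 * pe (lT a b) x) <= sumabs (lT a b) * x ^ 4).
    { rewrite Rabs_mult, Rabs_pos_eq by lra. rewrite Rmult_comm. apply Rmult_le_compat_r; lra. }
    assert (H3 : Rabs ESW <= (K ^ 2 * c * x ^ 4 + sumabs (lW a b) * x ^ 4) / 2).
    { eapply Rle_trans. apply AW.
      assert (x * (x ^ 3 * pe (lW a b) x) <= sumabs (lW a b) * x ^ 4).
      { replace (x * (x ^ 3 * pe (lW a b) x)) with (x ^ 4 * pe (lW a b) x) by ring.
        rewrite Rmult_comm. apply Rmult_le_compat_r; [lra|]. eapply Rle_trans; [apply Rle_abs|auto]. }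
      lra. }
    assert (sSS <= K ^ 2 * c * x ^ 4) by (eapply Rle_trans; [exact BS|]; apply Rmult_le_compat_l; auto).
    assert (K ^ 2 * c ^ 2 * x ^ 5 <= K ^ 2 * c ^ 2 * x ^ 4) by (apply Rmult_le_compat_l; auto).
    assert (0 <= s0 ^ 2) by apply pow2_ge_0.
    assert (Hd2 : (lam * dl) ^ 2 <= 9 * (K ^ 2 * c ^ 2) * x ^ 4).
    { rewrite <- (pow2_abs (lam * dl)). rewrite Rabs_mult, (Rabs_pos_eq lam) by lra.
      assert (HH5 : lam * Rabs dl <= lam * (3 * (K * c) * x ^ 3)) by (apply Rmult_le_compat_l; lra).
      replace (lam * (3 * (K * c) * x ^ 3)) with (3 * (K * c) * x ^ 2) in HH5 by (rewrite Hxl; field; lra).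
      assert (HH6 : (lam * Rabs dl) ^ 2 <= (3 * (K * c) * x ^ 2) ^ 2).
      { apply pow_incr. split; auto. apply Rmult_le_pos; [lra|apply Rabs_pos]. }
      replace ((3 * (K * c) * x ^ 2) ^ 2) with (9 * (K ^ 2 * c ^ 2) * x ^ 4) in HH6 by ring. lra. }
    assert (0 <= (lam * dl) ^ 2) by apply pow2_ge_0.
    unfold Ct. set (E1 := x ^ 4 * pe (lT a b) x) in *.
    apply Rabs_le. apply abs_btw in H1. apply abs_btw in H3. split; nra.
  -
    replace e2 with (2 * x ^ 2 + x ^ 3 * pe (lE a b) x + dl) by (symmetry; exact IE).
    assert (x ^ 3 * pe (lE a b) x >= - (sumabs (lE a b) * x ^ 3)).
    { assert (Rabs (x ^ 3 * pe (lE a b) x) <= sumabs (lE a b) * x ^ 3).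
      { rewrite Rabs_mult, Rabs_pos_eq by lra. rewrite Rmult_comm. apply Rmult_le_compat_r; lra. }
      apply abs_btw in H. lra. }
    apply abs_btw in Hdl. unfold Ce. lra.
Qed.


Lemma core F a b K M : 0 <= K -> HFprop F a b K M ->
  exists C L0, 1 <= L0 /\ forall lam, L0 <= lam -> forall (h : R -> R) A,
    (forall x, h x = lam * F (Uf lam x) + A * (x - lam)) ->
    Rabs (rho h lam - (1 - 3 * a ^ 2 * (/ lam) / 2)) <= C * (/ lam) ^ 2.
Proof.
  intros HK HF. destruct (Phi_bound M) as [c [Hc HPhi]].
  set (cq := Cq a b K c). set (ct := Ct a b K c). set (ce := Ce a b K c).
  assert (Kc : 0 <= K * c) by nra. assert (K2c : 0 <= K ^ 2 * c) by (apply Rmult_le_pos; nra).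
  assert (K2c2 : 0 <= K ^ 2 * c ^ 2) by (apply Rmult_le_pos; nra).
  assert (Hcq : 0 <= cq).
  { unfold cq, Cq. generalize (sumabs_nonneg (lQ a b)). intros. nra. }
  assert (Hct : 0 <= ct).
  { unfold ct, Ct. generalize (sumabs_nonneg (lT a b)) (sumabs_nonneg (lW a b)). intros. nra. }
  assert (Hce : 0 <= ce).
  { unfold ce, Ce. generalize (sumabs_nonneg (lE a b)). intros. nra. }
  set (C' := (ct + 6 * a ^ 2 * cq) / 2).
  assert (HC' : 0 <= C') by (unfold C'; assert (0 <= a ^ 2) by nra; nra).
  exists ((3 * a ^ 2 + C') ^ 2 / 3 + C' / 2), (1 + cq + ce + 2 * (3 * a ^ 2 + C')).
  assert (Ha2 : 0 <= a ^ 2) by nra.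
  split. nra.
  intros lam Hlam h A Hh.
  assert (Hl : 1 <= lam) by nra. assert (Hl0 : 0 < lam) by lra.
  set (x := / lam).
  assert (Hx : 0 < x) by (apply Rinv_0_lt_compat; lra).
  assert (Hxl : x * lam = 1) by (unfold x; field; lra).
  assert (Hx1 : x <= 1) by nra.
  assert (Hcqx : cq * x <= 1) by nra.
  assert (Hcex : ce * x <= 1) by nra.
  assert (Hsm : (3 * a ^ 2 + C') * x <= / 2).
  { assert (2 * ((3 * a ^ 2 + C') * x) <= 1) by nra. lra. }
  assert (Gf1 := good_f1 F a b K M lam Hl0 HK HF).
  assert (HR := rho_formula lam F h A Hl0 Gf1 Hh).
  assert (HE := est F a b K M c lam Hl HK HF Hc (fun j Hj => HPhi lam Hl j Hj)).
  cbv zeta in HR, HE. unfold x in HE.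
  destruct HE as [EQ [ET EE]]. fold cq ct ce in EQ, ET, EE.
  set (Q := pois_E lam (fun x0 : R => F (Uf lam x0) ^ 2) - pois_E lam (fun x0 : R => F (Uf lam x0)) ^ 2 -
        lam * pois_E lam (fun x0 : R => F (Uf lam x0) * Uf lam x0 ^ 1) ^ 2) in *.
  set (e2 := pois_E lam (fun x0 : R => F (Uf lam x0) * Uf lam x0 ^ 2) -
        / lam * pois_E lam (fun x0 : R => F (Uf lam x0) * Uf lam x0 ^ 1) -
        / lam * pois_E lam (fun x0 : R => F (Uf lam x0))) in *.
  fold x in EQ, ET, EE, HR, e2, Q |- *.
  assert (Hx2 : 0 < x ^ 2) by (apply pow_lt; lra).
  assert (HQ : 0 < Q).
  { apply abs_btw in EQ. assert (cq * x ^ 3 <= x ^ 2).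
    { replace (cq * x ^ 3) with ((cq * x) * x ^ 2) by ring.
      rewrite <- (Rmult_1_l (x ^ 2)) at 2. apply Rmult_le_compat_r; lra. }
    lra. }
  assert (He2 : 0 < e2).
  { assert (ce * x ^ 3 <= x ^ 2).
    { replace (ce * x ^ 3) with ((ce * x) * x ^ 2) by ring.
      rewrite <- (Rmult_1_l (x ^ 2)) at 2. apply Rmult_le_compat_r; lra. }
    lra. }
  specialize (HR HQ). fold x in HR.
  fold x.
  apply (final_alg x a Q (2 * Q - (e2 / x) ^ 2) e2 (rho h lam) cq ct); auto.
  rewrite HR. unfold x. assert (0 < sqrt (2 * Q)) by (apply sqrt_lt_R0; lra). field; repeat split; lra.
Qed.


Theorem lemma2p3 (lam : nat -> R) (Hpos : forall n, 0 < lam n)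
  (Hlim : is_lim_seq lam p_infty) (d : R) (Hd : -1 < d) :
  exists (C : R) (N : nat), forall n : nat, (N <= n)%nat ->
    Rabs (rho (psi d (lam n)) (lam n)
          - (1 - (d - 1) ^ 2 / (6 * lam n))) <= C / (lam n) ^ 2.
Proof.
  destruct (Fd_bound d Hd) as [K [M [HK HFd]]].
  destruct (core (Fd d) ((d - 1) / 3) ((d - 1) * (d - 2) / 12) K M HK HFd) as [C [L0 [HL0 Hc]]].
  apply is_lim_seq_spec in Hlim. destruct (Hlim L0) as [N HN].
  exists C, N. intros n Hn. specialize (HN n Hn).
  assert (Hl := Hpos n).
  specialize (Hc (lam n) ltac:(lra) (psi d (lam n)) (2 / (d + 1))).
  assert (H := Hc (fun x => psi_decomp d (lam n) x Hd Hl)).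
  replace (1 - (d - 1) ^ 2 / (6 * lam n)) with (1 - 3 * ((d - 1) / 3) ^ 2 * / lam n / 2) by (field; lra).
  replace (C / lam n ^ 2) with (C * (/ lam n) ^ 2) by (field; lra).
  exact H.
Qed.
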